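(* Let $\alpha\ge 0$ and let $u_0,v_0,c\in\mathcal C([0,1])$ with $u_0,v_0\ge 0$ and $0<\underline c\le c(x)\le\overline c$ on $[0,1]$, where $\underline c,\overline c$ are constants. Assume either that $u_0(0)=0$ and $v_0(1)=0$ (case (DBC)), or that $u_0(0)=u_0(1)$, $v_0(0)=v_0(1)$ and $c(0)=c(1)$ (case (PBC)). Then the corresponding problem (system (S) with the (DBC), resp. (PBC), boundary conditions and initial data $u(\cdot,0)=u_0$, $v(\cdot,0)=v_0$) has a unique global mild solution $(u,v)$, and it satisfies, for all $x\in[0,1]$, $t\ge 0$, $$0\le u(x,t)\le \frac{\overline c}{\underline c}\max\Big\{\max_{[0,1]}u_0,\ \alpha\Big\},\qquad 0\le v(x,t)\le \frac{\overline c}{\underline c}\max\Big\{\max_{[0,1]}v_0,\ \alpha\Big\}.$$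
   Context: System (S): for $x\in[0,1]$, $t>0$, $$\partial_t u+\partial_x(c(x)u)=\frac{\alpha v}{1+u+v}-u,\qquad \partial_t v-\partial_x(c(x)v)=\frac{\alpha u}{1+u+v}-v.$$ Boundary conditions: (DBC) $u(0,t)=0$, $v(1,t)=0$ for $t>0$; (PBC) $u(0,t)=u(1,t)$, $v(0,t)=v(1,t)$ for $t>0$ (with $c$ periodic). Mild solutions: define $\frac1C=\int_0^1\frac{dx}{c(x)}$, the change of variable $X(x)=C\int_0^x\frac{d\xi}{c(\xi)}\in[0,1]$ (a homeomorphism of $[0,1]$), $\beta(X)=C/c(x)$ where $X=X(x)$, and $U_0(X)=c(x)u_0(x)/C$, $V_0(X)=c(x)v_0(x)/C$. For functions $U,V$ set $R_{U,V}(X,t)=\frac{\alpha V(X,t)}{1+\beta(X)(U(X,t)+V(X,t))}$ and $R_{V,U}(X,t)=\frac{\alpha U(X,t)}{1+\beta(X)(U(X,t)+V(X,t))}$. For (PBC), $(U,V)\in\mathcal C(\mathbb T^1\times[0,\infty))^2$ (with $\mathbb T^1=[0,1]$ with endpoints identified, arguments taken mod 1) is required to satisfy $U(X,t)=U_0(X-Ct)e^{-t}+\int_0^t e^{s-t}R_{U,V}(X+C(s-t),s)\,ds$, $V(X,t)=V_0(X+Ct)e^{-t}+\int_0^t e^{s-t}R_{V,U}(X-C(s-t),s)\,ds$. For (DBC), $(U,V)\in\mathcal C([0,1]\times[0,\infty))^2$ is required to satisfy $U(X,t)=U_0(X-Ct)H(X-Ct)e^{-t}+\int_{(t-X/C)_+}^t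 e^{s-t}R_{U,V}(X+C(s-t),s)\,ds$, $V(X,t)=V_0(X+Ct)H(1-X-Ct)e^{-t}+\int_{(t-(1-X)/C)_+}^t e^{s-t}R_{V,U}(X-C(s-t),s)\,ds$, with $H$ the Heaviside function. In either case $(u(x,t),v(x,t))=\frac{C}{c(x)}(U(X(x),t),V(X(x),t))$ is called a global mild solution. *)

(* Defs.v *)
From Stdlib Require Import Reals Lra ClassicalEpsilon.
Open Scope R_scope.

(* Total Riemann integral: the value of RiemannInt if f is Riemann integrable
   on [a,b] (independent of the integrability proof), junk otherwise. *)
Definition RInt (f : R -> R) (a b : R) : R :=
  epsilon (inhabits 0)
    (fun I => exists pr : Riemann_integrable f a b, RiemannInt pr = I).

Definition cont01 (f : R -> R) : Prop :=
  forall x, 0 <= x <= 1 -> forall eps, 0 < eps -> exists del, 0 < del /\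
    forall y, 0 <= y <= 1 -> Rabs (y - x) < del -> Rabs (f y - f x) < eps.

Definition cont2_on (D : R -> R -> Prop) (U : R -> R -> R) : Prop :=
  forall X t, D X t -> forall eps, 0 < eps -> exists del, 0 < del /\
    forall X' t', D X' t' -> Rabs (X' - X) < del -> Rabs (t' - t) < del ->
      Rabs (U X' t' - U X t) < eps.

Definition is_max01 (f : R -> R) (M : R) : Prop :=
  (forall x, 0 <= x <= 1 -> f x <= M) /\ (exists x, 0 <= x <= 1 /\ f x = M).

Definition frac (y : R) : R := y - IZR (Int_part y).

Definition Heav (y : R) : R := if Rle_dec 0 y then 1 else 0.

Definition Cc (c : R -> R) : R := / RInt (fun x => / c x) 0 1.

Definition Xmap (c : R -> R) (x : R) : R := Cc c * RInt (fun y => / c y) 0 x.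

Definition Xinv (c : R -> R) (X : R) : R :=
  epsilon (inhabits 0) (fun x => 0 <= x <= 1 /\ Xmap c x = X).

Definition betaf (c : R -> R) (X : R) : R := Cc c / c (Xinv c X).

Definition U0f (c u0 : R -> R) (X : R) : R :=
  c (Xinv c X) * u0 (Xinv c X) / Cc c.

(* global mild solution in the (PBC) case; U, V are 1-periodic in X,
   i.e. functions on T^1 x [0,oo) *)
Definition mild_PBC (alpha : R) (c u0 v0 : R -> R) (U V : R -> R -> R) : Prop :=
  let C := Cc c in
  cont2_on (fun _ t => 0 <= t) U /\ cont2_on (fun _ t => 0 <= t) V /\
  (forall X t, 0 <= t -> U (X + 1) t = U X t /\ V (X + 1) t = V X t) /\
  (forall X t, 0 <= X <= 1 -> 0 <= t ->
     U X t = U0f c u0 (frac (X - C * t)) * exp (- t)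
       + RInt (fun s => exp (s - t) *
            (alpha * V (X + C * (s - t)) s /
              (1 + betaf c (frac (X + C * (s - t)))
                   * (U (X + C * (s - t)) s + V (X + C * (s - t)) s)))) 0 t /\
     V X t = U0f c v0 (frac (X + C * t)) * exp (- t)
       + RInt (fun s => exp (s - t) *
            (alpha * U (X - C * (s - t)) s /
              (1 + betaf c (frac (X - C * (s - t)))
                   * (U (X - C * (s - t)) s + V (X - C * (s - t)) s)))) 0 t).

Definition mild_DBC (alpha : R) (c u0 v0 : R -> R) (U V : R -> R -> R) : Prop :=
  let C := Cc c in
  cont2_on (fun X t => 0 <= X <= 1 /\ 0 <= t) U /\
  cont2_on (fun X t => 0 <= X <= 1 /\ 0 <= t) V /\
  (forall X t, 0 <= X <= 1 -> 0 <= t ->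
     U X t = U0f c u0 (X - C * t) * Heav (X - C * t) * exp (- t)
       + RInt (fun s => exp (s - t) *
            (alpha * V (X + C * (s - t)) s /
              (1 + betaf c (X + C * (s - t))
                   * (U (X + C * (s - t)) s + V (X + C * (s - t)) s))))
            (Rmax 0 (t - X / C)) t /\
     V X t = U0f c v0 (X + C * t) * Heav (1 - X - C * t) * exp (- t)
       + RInt (fun s => exp (s - t) *
            (alpha * U (X - C * (s - t)) s /
              (1 + betaf c (X - C * (s - t))
                   * (U (X - C * (s - t)) s + V (X - C * (s - t)) s))))
            (Rmax 0 (t - (1 - X) / C)) t).

Definition ufrom (c : R -> R) (U : R -> R -> R) (x t : R) : R :=
  Cc c / c x * U (Xmap c x) t.

Definition sol_bounds (alpha : R) (c u0 v0 : R -> R) (cl cu : R)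
    (U V : R -> R -> R) : Prop :=
  forall Mu Mv, is_max01 u0 Mu -> is_max01 v0 Mv ->
  forall x t, 0 <= x <= 1 -> 0 <= t ->
    0 <= ufrom c U x t <= cu / cl * Rmax Mu alpha /\
    0 <= ufrom c V x t <= cu / cl * Rmax Mv alpha.

(* Main.v *)
Require Import Defs.
From Stdlib Require Import Reals Lra Lia ClassicalEpsilon FunctionalExtensionality PropExtensionality Classical.
From Coquelicot Require Import Coquelicot.
Open Scope R_scope.
Ltac slra := repeat (match goal with x := _ |- _ => subst x end); lra.

Definition rc (P : R -> Prop) (f : R -> R) (x : R) : Prop :=
  forall eps, 0 < eps -> exists del, 0 < del /\
    forall y, P y -> Rabs (y - x) < del -> Rabs (f y - f x) < eps.

Definition clamp (a b x : R) := Rmax a (Rmin b x).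

Lemma clamp_in a b x : a <= b -> a <= clamp a b x <= b.
Proof. intros; unfold clamp, Rmax, Rmin; repeat destruct Rle_dec; lra. Qed.

Lemma clamp_id a b x : a <= x <= b -> clamp a b x = x.
Proof. intros; unfold clamp, Rmax, Rmin; repeat destruct Rle_dec; lra. Qed.

Lemma clamp_lip a b x y : a <= b -> Rabs (clamp a b x - clamp a b y) <= Rabs (x - y).
Proof. intros; unfold clamp, Rmax, Rmin; repeat destruct Rle_dec;
  unfold Rabs; repeat destruct Rcase_abs; lra. Qed.

Lemma ex_RInt_rc f a b : a <= b ->
  (forall x, a <= x <= b -> rc (fun y => a <= y <= b) f x) -> ex_RInt f a b.
Proof.
  intros Hab Hc.
  apply ex_RInt_ext with (f := fun x => f (clamp a b x)).
  { intros x Hx. rewrite Rmin_left in Hx by lra. rewrite Rmax_right in Hx by lra.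
    rewrite clamp_id; lra. }
  apply (@ex_RInt_continuous R_CompleteNormedModule). intros z _.
  apply continuity_pt_filterlim.
  intros eps Heps.
  destruct (Hc (clamp a b z) (clamp_in a b z Hab) eps Heps) as [d [Hd Hd']].
  exists d; split; auto. intros y [_ Hy]. unfold R_dist in *. simpl in *. unfold R_dist in *.
  apply Hd'. apply clamp_in; lra.
  eapply Rle_lt_trans. apply clamp_lip; lra. exact Hy.
Qed.

Lemma Defs_RInt_eq f a b : ex_RInt f a b -> Defs.RInt f a b = RInt f a b.
Proof.
  intros H. unfold Defs.RInt.
  assert (HP : exists pr : Riemann_integrable f a b, RiemannInt pr = RInt f a b).
  { exists (ex_RInt_Reals_0 _ _ _ H). symmetry. apply RInt_Reals. }
  destruct (epsilon_spec (inhabits 0) (fun I => exists pr : Riemann_integrable f a b, RiemannInt pr = I)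
    (ex_intro _ _ HP)) as [pr Hpr].
  rewrite <- Hpr. symmetry. apply RInt_Reals.
Qed.

Lemma Defs_RInt_point f a : Defs.RInt f a a = 0.
Proof. rewrite Defs_RInt_eq by apply ex_RInt_point. exact (@RInt_point R_CompleteNormedModule a f). Qed.

Lemma unif_principle (a b : R) (Q : R -> R -> Prop) :
  a <= b ->
  (forall x d d', Q x d -> 0 < d' <= d -> Q x d') ->
  (forall x, a <= x <= b -> exists d, 0 < d /\ forall y, a <= y <= b -> Rabs (y - x) < d -> Q y d) ->
  exists d, 0 < d /\ forall y, a <= y <= b -> Q y d.
Proof.
  intros Hab Hmon Hloc.
  set (E := fun s => a <= s <= b /\ exists d, 0 < d /\ forall y, a <= y <= s -> Q y d).
  assert (Ea : E a).
  { destruct (Hloc a (conj (Rle_refl a) Hab)) as [d [Hd Hd']].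
    split; [lra|]. exists d; split; auto. intros y Hy. replace y with a by lra.
    apply Hd'; [lra|]. rewrite Rminus_diag, Rabs_R0; lra. }
  assert (Hb : bound E). { exists b. intros s [Hs _]. lra. }
  destruct (completeness E Hb (ex_intro _ a Ea)) as [s [Hub Hlub]].
  assert (Has : a <= s) by (apply Hub; auto).
  assert (Hsb : s <= b) by (apply Hlub; intros s' [Hs' _]; lra).
  destruct (Hloc s (conj Has Hsb)) as [ds [Hds Hds']].
  assert (Hex : exists s1, E s1 /\ s - ds < s1).
  { apply NNPP; intro Hn.
    assert (s <= s - ds). { apply Hlub. intros s1 Hs1. apply Rnot_lt_le. intro. apply Hn; eauto. }
    lra. }
  destruct Hex as [s1 [[Hs1 [d1 [Hd1 Hd1']]] Hlt]].
  set (s2 := Rmin b (s + ds/2)).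
  assert (E2 : E s2).
  { split. unfold s2, Rmin; destruct Rle_dec; lra.
    exists (Rmin d1 ds). split. apply Rmin_pos; auto.
    intros y Hy. destruct (Rle_dec y s1).
    - apply Hmon with d1. apply Hd1'; lra. split. apply Rmin_pos; auto. apply Rmin_l.
    - apply Hmon with ds. apply Hds'. unfold s2, Rmin in Hy; destruct Rle_dec in Hy; lra.
      unfold s2, Rmin in Hy; destruct Rle_dec in Hy; unfold Rabs; destruct Rcase_abs; lra.
      split. apply Rmin_pos; auto. apply Rmin_r. }
  assert (s2 <= s) by (apply Hub; auto).
  assert (s2 = b) by (unfold s2 in *; unfold Rmin in *; destruct Rle_dec; lra).
  destruct E2 as [_ [d [Hd Hd']]]. exists d; split; auto. intros y Hy. apply Hd'. lra.
Qed.

Lemma lim_ev (u : nat -> R) (l : R) : is_lim_seq u l ->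
  forall eps, 0 < eps -> exists N, forall n, (N <= n)%nat -> Rabs (u n - l) < eps.
Proof.
  intros H eps He. apply is_lim_seq_spec in H. destruct (H (mkposreal eps He)) as [N HN].
  exists N. intros n Hn. apply (HN n Hn).
Qed.

Lemma ev_lim (u : nat -> R) (l : R) :
  (forall eps, 0 < eps -> exists N, forall n, (N <= n)%nat -> Rabs (u n - l) < eps) -> is_lim_seq u l.
Proof.
  intros H. apply is_lim_seq_spec. intros [eps He]. destruct (H eps He) as [N HN].
  exists N. exact HN.
Qed.

Definition c2at (D : R -> R -> Prop) (U : R -> R -> R) (X t : R) : Prop :=
  forall eps, 0 < eps -> exists del, 0 < del /\
    forall X' t', D X' t' -> Rabs (X' - X) < del -> Rabs (t' - t) < del ->
      Rabs (U X' t' - U X t) < eps.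

Definition sc2 (D : R -> R -> Prop) (U : R -> R -> R) (X t : R) : Prop :=
  forall x s : nat -> R, (forall n, D (x n) (s n)) -> is_lim_seq x X -> is_lim_seq s t ->
    is_lim_seq (fun n => U (x n) (s n)) (U X t).

Definition sc1 (P : R -> Prop) (f : R -> R) (x : R) : Prop :=
  forall u : nat -> R, (forall n, P (u n)) -> is_lim_seq u x -> is_lim_seq (fun n => f (u n)) (f x).

Lemma c2at_sc2 D U X t : c2at D U X t -> sc2 D U X t.
Proof.
  intros H x s HD Hx Hs. apply ev_lim. intros eps He.
  destruct (H eps He) as [d [Hd Hd']].
  destruct (lim_ev _ _ Hx d Hd) as [N1 HN1].
  destruct (lim_ev _ _ Hs d Hd) as [N2 HN2].
  exists (max N1 N2). intros n Hn. apply Hd'; auto. apply HN1; lia. apply HN2; lia.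
Qed.

Lemma rc_sc1 P f x : rc P f x -> sc1 P f x.
Proof.
  intros H u HP Hu. apply ev_lim. intros eps He.
  destruct (H eps He) as [d [Hd Hd']].
  destruct (lim_ev _ _ Hu d Hd) as [N1 HN1].
  exists N1. intros n Hn. apply Hd'; auto.
Qed.

Lemma half_pow_lim : is_lim_seq (fun n => (/2)^n) 0.
Proof. apply is_lim_seq_geom. rewrite Rabs_right; lra. Qed.

Lemma seq_close (a : nat -> R) (l : R) : (forall n, Rabs (a n - l) < (/2)^n) -> is_lim_seq a l.
Proof.
  intros H. apply ev_lim. intros eps He.
  destruct (lim_ev _ _ half_pow_lim eps He) as [N HN].
  exists N. intros n Hn. specialize (HN n Hn). specialize (H n).
  rewrite Rminus_0_r, Rabs_right in HN by (apply Rle_ge, pow_le; lra). lra.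
Qed.

Lemma sc2_c2at D U X t : sc2 D U X t -> c2at D U X t.
Proof.
  intros H eps He. apply NNPP. intro Hn.
  assert (Hall : forall n : nat, exists p : R * R, D (fst p) (snd p) /\ Rabs (fst p - X) < (/2)^n /\
      Rabs (snd p - t) < (/2)^n /\ eps <= Rabs (U (fst p) (snd p) - U X t)).
  { intro n. apply NNPP. intro Hn2. apply Hn. exists ((/2)^n). split. apply pow_lt; lra.
    intros X' t' HD H1 H2. apply Rnot_le_lt. intro. apply Hn2. exists (X', t'). simpl. auto. }
  set (p := fun n => proj1_sig (constructive_indefinite_description _ (Hall n))).
  assert (Hp : forall n, D (fst (p n)) (snd (p n)) /\ Rabs (fst (p n) - X) < (/2)^n /\
      Rabs (snd (p n) - t) < (/2)^n /\ eps <= Rabs (U (fst (p n)) (snd (p n)) - U X t)).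
  { intro n. unfold p. destruct (constructive_indefinite_description _ (Hall n)). auto. }
  specialize (H (fun n => fst (p n)) (fun n => snd (p n))).
  assert (Hl : is_lim_seq (fun n => U (fst (p n)) (snd (p n))) (U X t)).
  { apply H. intro n; apply Hp. apply seq_close; intro n; apply Hp. apply seq_close; intro n; apply Hp. }
  destruct (lim_ev _ _ Hl eps He) as [N HN]. specialize (HN N (le_n N)).
  destruct (Hp N) as [_ [_ [_ HH]]]. lra.
Qed.

Lemma sc1_rc P f x : sc1 P f x -> rc P f x.
Proof.
  intros H eps He. apply NNPP. intro Hn.
  assert (Hall : forall n : nat, exists y : R, P y /\ Rabs (y - x) < (/2)^n /\ eps <= Rabs (f y - f x)).
  { intro n. apply NNPP. intro Hn2. apply Hn. exists ((/2)^n). split. apply pow_lt; lra.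
    intros y HP H1. apply Rnot_le_lt. intro. apply Hn2. exists y. auto. }
  set (p := fun n => proj1_sig (constructive_indefinite_description _ (Hall n))).
  assert (Hp : forall n, P (p n) /\ Rabs (p n - x) < (/2)^n /\ eps <= Rabs (f (p n) - f x)).
  { intro n. unfold p. destruct (constructive_indefinite_description _ (Hall n)). auto. }
  assert (Hl : is_lim_seq (fun n => f (p n)) (f x)).
  { apply H. intro n; apply Hp. apply seq_close; intro n; apply Hp. }
  destruct (lim_ev _ _ Hl eps He) as [N HN]. specialize (HN N (le_n N)).
  destruct (Hp N) as [_ [_ HH]]. lra.
Qed.

Lemma cont2_on_c2at D U : cont2_on D U -> forall X t, D X t -> c2at D U X t.
Proof. intros H X t HD. exact (H X t HD). Qed.

Lemma c2at_cont2_on D U : (forall X t, D X t -> c2at D U X t) -> cont2_on D U.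
Proof. intros H X t HD. exact (H X t HD). Qed.

Lemma cont2_on_sc2 D U : cont2_on D U -> forall X t, D X t -> sc2 D U X t.
Proof. intros H X t HD. apply c2at_sc2. exact (H X t HD). Qed.

Lemma sc2_cont2_on D U : (forall X t, D X t -> sc2 D U X t) -> cont2_on D U.
Proof. intros H X t HD. apply sc2_c2at. auto. Qed.

Lemma cont2_on_iff D1 D2 U : (forall X t, D1 X t <-> D2 X t) -> cont2_on D1 U -> cont2_on D2 U.
Proof.
  intros Hi H X t HD eps He. destruct (H X t (proj2 (Hi X t) HD) eps He) as [d [Hd Hd']].
  exists d; split; auto. intros X' t' HD'. apply Hd'. apply Hi; auto.
Qed.

Lemma RInt_plusR (f g : R -> R) a b : ex_RInt f a b -> ex_RInt g a b ->
  @eq R (RInt (fun x => f x + g x) a b) (RInt f a b + RInt g a b).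
Proof. intros. exact (@RInt_plus R_CompleteNormedModule f g a b H H0). Qed.
Lemma RInt_minusR (f g : R -> R) a b : ex_RInt f a b -> ex_RInt g a b ->
  @eq R (RInt (fun x => f x - g x) a b) (RInt f a b - RInt g a b).
Proof. intros. exact (@RInt_minus R_CompleteNormedModule f g a b H H0). Qed.
Lemma RInt_scalR (f : R -> R) a b k : ex_RInt f a b ->
  @eq R (RInt (fun x => k * f x) a b) (k * RInt f a b).
Proof. intros. exact (@RInt_scal R_CompleteNormedModule f a b k H). Qed.
Lemma RInt_ChaslesR (f : R -> R) a b c : ex_RInt f a b -> ex_RInt f b c ->
  @eq R (RInt f a b + RInt f b c) (RInt f a c).
Proof. intros. exact (@RInt_Chasles R_CompleteNormedModule f a b c H H0). Qed.
Lemma RInt_constR (a b c : R) : @eq R (RInt (V := R_CompleteNormedModule) (fun _ => c) a b) ((b - a) * c).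
Proof. exact (@RInt_const R_CompleteNormedModule a b c). Qed.
Lemma RInt_extR (f g : R -> R) a b : (forall x, Rmin a b < x < Rmax a b -> f x = g x) -> @eq R (RInt f a b) (RInt g a b).
Proof. intros. exact (@RInt_ext R_CompleteNormedModule f g a b H). Qed.
Lemma ex_RInt_plusR (f g : R -> R) a b : ex_RInt f a b -> ex_RInt g a b -> ex_RInt (fun x => f x + g x) a b.
Proof. intros. exact (@ex_RInt_plus R_NormedModule f g a b H H0). Qed.
Lemma ex_RInt_minusR (f g : R -> R) a b : ex_RInt f a b -> ex_RInt g a b -> ex_RInt (fun x => f x - g x) a b.
Proof. intros. exact (@ex_RInt_minus R_NormedModule f g a b H H0). Qed.
Lemma ex_RInt_scalR (f : R -> R) a b k : ex_RInt f a b -> ex_RInt (fun x => k * f x) a b.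
Proof. intros. exact (@ex_RInt_scal R_NormedModule f a b k H). Qed.
Lemma ex_RInt_ChaslesR (f : R -> R) a b c : ex_RInt f a b -> ex_RInt f b c -> ex_RInt f a c.
Proof. intros. exact (@ex_RInt_Chasles R_NormedModule f a b c H H0). Qed.
Lemma ex_RInt_extR (f g : R -> R) a b : (forall x, Rmin a b < x < Rmax a b -> f x = g x) -> ex_RInt f a b -> ex_RInt g a b.
Proof. intros. exact (@ex_RInt_ext R_NormedModule f g a b H H0). Qed.

Lemma ex_RInt_sub (f : R -> R) a b c d : a <= c -> c <= d -> d <= b -> ex_RInt f a b -> ex_RInt f c d.
Proof.
  intros. apply (@ex_RInt_Chasles_2 R_CompleteNormedModule f a c d). lra.
  apply (@ex_RInt_Chasles_1 R_CompleteNormedModule f a d b). lra. auto.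
Qed.

Lemma chvar (f : R -> R) lo t : ex_RInt f lo t ->
  ex_RInt (fun r => f (t - r)) 0 (t - lo) /\ RInt f lo t = RInt (fun r => f (t - r)) 0 (t - lo).
Proof.
  intros H.
  assert (H' : ex_RInt f ((-1) * 0 + t) ((-1) * (t - lo) + t)).
  { replace ((-1) * 0 + t) with t by ring. replace ((-1) * (t - lo) + t) with lo by ring.
    apply (@ex_RInt_swap R_NormedModule); auto. }
  pose proof (@ex_RInt_comp_lin R_NormedModule f (-1) t 0 (t - lo) H') as Hex.
  pose proof (@RInt_comp_lin R_CompleteNormedModule f (-1) t 0 (t - lo) H') as Heq.
  replace ((-1) * 0 + t) with t in Heq by ring. replace ((-1) * (t - lo) + t) with lo in Heq by ring.
  assert (Hex2 : ex_RInt (fun r => f (t - r)) 0 (t - lo)).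
  { apply ex_RInt_extR with (f := fun r => (-1) * ((fun y => scal (-1) (f ((-1) * y + t))) r)).
    intros x _. simpl. change (scal (-1) (f ((-1)*x+t))) with ((-1) * f ((-1)*x+t)).
    replace ((-1)*x+t) with (t - x) by ring. ring.
    apply ex_RInt_scalR. exact Hex. }
  split; auto.
  rewrite <- (@opp_RInt_swap R_CompleteNormedModule f lo t H) in Heq.
  change (opp (RInt f lo t)) with (- RInt f lo t) in Heq.
  assert (E : RInt (fun y => scal (-1) (f ((-1) * y + t))) 0 (t - lo) = - RInt (fun r => f (t - r)) 0 (t - lo)).
  { replace (- RInt (fun r => f (t - r)) 0 (t - lo)) with
      ((-1) * RInt (fun r => f (t - r)) 0 (t - lo)) by ring.
    rewrite <- (RInt_scalR _ _ _ (-1) Hex2). apply RInt_extR. intros x _. simpl.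
    change (scal (-1) (f ((-1)*x+t))) with ((-1) * f ((-1)*x+t)).
    replace ((-1)*x+t) with (t - x) by ring. auto. }
  assert (Hc : - RInt (fun r => f (t - r)) 0 (t - lo) = - RInt f lo t) by (etransitivity; [symmetry; exact E | exact Heq]). lra.
Qed.

Lemma exp_int k a t : 0 < k -> a <= t ->
  ex_RInt (fun s => exp (k * (s - t))) a t /\
  @eq R (RInt (fun s => exp (k * (s - t))) a t) ((1 - exp (k * (a - t))) / k).
Proof.
  intros Hk Hat.
  assert (HI : is_RInt (fun s => exp (k * (s - t))) a t
     (minus ((fun s => exp (k * (s - t)) / k) t) ((fun s => exp (k * (s - t)) / k) a))).
  { apply (@is_RInt_derive R_CompleteNormedModule (fun s => exp (k * (s - t)) / k)).
    - intros x _. auto_derive; auto. replace (x + - t) with (x - t) by ring. field. lra.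
    - intros x _. apply continuity_pt_filterlim. reg. }
  split. eexists; eauto.
  apply (@is_RInt_unique R_CompleteNormedModule) in HI. rewrite HI. simpl. change (minus ?x ?y) with (x - y).
  replace (k * (t - t)) with 0 by ring. rewrite exp_0. field. lra.
Qed.

Lemma RInt_le_R (f g : R -> R) a b : a <= b -> ex_RInt f a b -> ex_RInt g a b ->
  (forall x, a <= x <= b -> f x <= g x) -> RInt f a b <= RInt g a b.
Proof. intros. apply RInt_le; auto. intros; apply H2; lra. Qed.

Lemma RInt_ge0_R f a b : a <= b -> ex_RInt f a b ->
  (forall x, a <= x <= b -> 0 <= f x) -> 0 <= RInt f a b.
Proof. intros. apply RInt_ge_0; auto. intros; apply H1; lra. Qed.

Definition DD (Dx : R -> Prop) (X t : R) : Prop := Dx X /\ 0 <= t.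

Record setting := mkS {
  sC : R; sal : R; sb : R -> R; bmin : R; bmax : R; sDx : R -> Prop;
  sAU : R -> R -> R; sAV : R -> R -> R; sloU : R -> R -> R; sloV : R -> R -> R;
  MAU : R; MAV : R;
  C_pos : 0 < sC; al_nn : 0 <= sal; bmin_pos : 0 < bmin;
  b_bd : forall Y, sDx Y -> bmin <= sb Y <= bmax;
  b_cont : forall Y, sDx Y -> rc sDx sb Y;
  Dx01 : forall Y, 0 <= Y <= 1 -> sDx Y;
  AU_cont : cont2_on (DD sDx) sAU; AV_cont : cont2_on (DD sDx) sAV;
  AU_bd : forall X t, sDx X -> 0 <= t -> 0 <= sAU X t <= MAU * exp (- t);
  AV_bd : forall X t, sDx X -> 0 <= t -> 0 <= sAV X t <= MAV * exp (- t);
  loU_bd : forall X t, sDx X -> 0 <= t -> 0 <= sloU X t <= t;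
  loV_bd : forall X t, sDx X -> 0 <= t -> 0 <= sloV X t <= t;
  loU_cont : cont2_on (DD sDx) sloU; loV_cont : cont2_on (DD sDx) sloV;
  pathU : forall X t s, sDx X -> 0 <= t -> sloU X t <= s <= t -> sDx (X + sC * (s - t));
  pathV : forall X t s, sDx X -> 0 <= t -> sloV X t <= s <= t -> sDx (X - sC * (s - t))
}.

Definition KU (S : setting) (U V : R -> R -> R) (Y s : R) : R :=
  sal S * V Y s / (1 + sb S Y * (U Y s + V Y s)).
Definition KV (S : setting) (U V : R -> R -> R) (Y s : R) : R :=
  sal S * U Y s / (1 + sb S Y * (U Y s + V Y s)).

Definition NU (S : setting) (U V : R -> R -> R) (X t s : R) : R :=
  exp (s - t) * (sal S * V (X + sC S * (s - t)) s /
    (1 + sb S (X + sC S * (s - t)) * (U (X + sC S * (s - t)) s + V (X + sC S * (s - t)) s))).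
Definition NV (S : setting) (U V : R -> R -> R) (X t s : R) : R :=
  exp (s - t) * (sal S * U (X - sC S * (s - t)) s /
    (1 + sb S (X - sC S * (s - t)) * (U (X - sC S * (s - t)) s + V (X - sC S * (s - t)) s))).

Definition PhiU (S : setting) (U V : R -> R -> R) (X t : R) : R :=
  sAU S X t + Defs.RInt (NU S U V X t) (sloU S X t) t.
Definition PhiV (S : setting) (U V : R -> R -> R) (X t : R) : R :=
  sAV S X t + Defs.RInt (NV S U V X t) (sloV S X t) t.

Definition Good (S : setting) (U V : R -> R -> R) : Prop :=
  cont2_on (DD (sDx S)) U /\ cont2_on (DD (sDx S)) V /\
  forall X t, sDx S X -> 0 <= t -> 0 <= U X t /\ 0 <= V X t.

Lemma NU_K S U V X t s : NU S U V X t s = exp (s - t) * KU S U V (X + sC S * (s - t)) s.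
Proof. reflexivity. Qed.
Lemma NV_K S U V X t s : NV S U V X t s = exp (s - t) * KV S U V (X + (- sC S) * (s - t)) s.
Proof. unfold NV, KV. replace (X + - sC S * (s - t)) with (X - sC S * (s - t)) by ring. reflexivity. Qed.

Lemma den_pos S U V Y s : Good S U V -> sDx S Y -> 0 <= s -> 1 <= 1 + sb S Y * (U Y s + V Y s).
Proof.
  intros [_ [_ Hn]] HY Hs. destruct (Hn Y s HY Hs). pose proof (b_bd S Y HY). pose proof (bmin_pos S).
  assert (0 <= sb S Y * (U Y s + V Y s)) by (apply Rmult_le_pos; lra). lra.
Qed.

Lemma K_cont_gen S (U V W : R -> R -> R) : Good S U V -> cont2_on (DD (sDx S)) W ->
  cont2_on (DD (sDx S)) (fun Y s => sal S * W Y s / (1 + sb S Y * (U Y s + V Y s))).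
Proof.
  intros HG HW. destruct HG as [HU [HV Hn]].
  apply sc2_cont2_on. intros Y s HD x y Hxy Hx Hy.
  apply is_lim_seq_div'.
  - apply is_lim_seq_scal_l with (lu := Finite (W Y s)). apply (cont2_on_sc2 _ _ HW); auto.
  - apply is_lim_seq_plus' with (l1 := 1). apply is_lim_seq_const.
    apply is_lim_seq_mult'.
    + apply (rc_sc1 _ _ _ (b_cont S Y (proj1 HD))). intro n; apply Hxy. auto.
    + apply is_lim_seq_plus'. apply (cont2_on_sc2 _ _ HU); auto. apply (cont2_on_sc2 _ _ HV); auto.
  - pose proof (den_pos S U V Y s (conj HU (conj HV Hn)) (proj1 HD) (proj2 HD)). lra.
Qed.

Lemma KU_cont S U V : Good S U V -> cont2_on (DD (sDx S)) (KU S U V).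
Proof. intros HG. apply (K_cont_gen S U V V HG). apply HG. Qed.
Lemma KV_cont S U V : Good S U V -> cont2_on (DD (sDx S)) (KV S U V).
Proof. intros HG. apply (K_cont_gen S U V U HG). apply HG. Qed.

Lemma K_bd_gen S U V (w : R) Y s : Good S U V -> sDx S Y -> 0 <= s -> 0 <= w <= U Y s + V Y s ->
  0 <= sal S * w / (1 + sb S Y * (U Y s + V Y s)) <= sal S / bmin S.
Proof.
  intros HG HY Hs Hw. pose proof (den_pos S U V Y s HG HY Hs) as Hd.
  destruct HG as [_ [_ Hn]]. destruct (Hn Y s HY Hs).
  pose proof (b_bd S Y HY). pose proof (bmin_pos S). pose proof (al_nn S).
  split.
  - apply Rmult_le_pos. apply Rmult_le_pos; lra. left; apply Rinv_0_lt_compat; lra.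
  - unfold Rdiv. apply Rmult_le_reg_r with (1 + sb S Y * (U Y s + V Y s)). lra.
    rewrite Rmult_assoc, Rinv_l by lra. rewrite Rmult_1_r.
    apply Rmult_le_reg_r with (bmin S). lra.
    replace (sal S * / bmin S * (1 + sb S Y * (U Y s + V Y s)) * bmin S) with
      (sal S * (1 + sb S Y * (U Y s + V Y s))) by (field; lra).
    rewrite Rmult_assoc. apply Rmult_le_compat_l; auto.
    assert (w * bmin S <= sb S Y * (U Y s + V Y s)).
    { apply Rle_trans with (sb S Y * w). rewrite Rmult_comm. apply Rmult_le_compat_r; lra.
      apply Rmult_le_compat_l; lra. }
    lra.
Qed.

Lemma KU_bd S U V Y s : Good S U V -> sDx S Y -> 0 <= s -> 0 <= KU S U V Y s <= sal S / bmin S.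
Proof.
  intros HG HY Hs. unfold KU. apply K_bd_gen; auto. destruct HG as [_ [_ Hn]]. destruct (Hn Y s HY Hs). lra.
Qed.
Lemma KV_bd S U V Y s : Good S U V -> sDx S Y -> 0 <= s -> 0 <= KV S U V Y s <= sal S / bmin S.
Proof.
  intros HG HY Hs. unfold KV. apply K_bd_gen; auto. destruct HG as [_ [_ Hn]]. destruct (Hn Y s HY Hs). lra.
Qed.

Lemma lip_gen (al b u v u' v' d w w' : R) :
  0 <= al -> 0 <= b -> 0 <= u -> 0 <= v -> 0 < d -> d <= 1 + b * (u' + v') ->
  ((w = v /\ w' = v') \/ (w = u /\ w' = u')) ->
  Rabs (al * w' / (1 + b * (u' + v')) - al * w / (1 + b * (u + v))) <=
    al / d * (Rabs (u' - u) + Rabs (v' - v)).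
Proof.
  intros Hal Hb Hu Hv Hd Hd' Hw.
  assert (Hbu : 0 <= b * u) by (apply Rmult_le_pos; lra).
  assert (Hbv : 0 <= b * v) by (apply Rmult_le_pos; lra).
  assert (Hpa : 0 <= Rabs (u' - u)) by apply Rabs_pos. assert (Hpb : 0 <= Rabs (v' - v)) by apply Rabs_pos.
  remember (1 + b * (u + v)) as D eqn:ED. remember (1 + b * (u' + v')) as D' eqn:ED'.
  assert (HD : 1 <= D) by (rewrite ED; replace (b * (u + v)) with (b*u + b*v) by ring; lra).
  assert (HD1 : 0 < D') by lra.
  assert (E : al * w' / D' - al * w / D = al * (w' * D - w * D') / (D' * D)) by (field; lra).
  rewrite E.
  assert (Hn : Rabs (w' * D - w * D') <= D * (Rabs (u' - u) + Rabs (v' - v))).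
  { destruct Hw as [[-> ->] | [-> ->]].
    - replace (v' * D - v * D') with ((v' - v) * (1 + b * u) - b * v * (u' - u)) by (rewrite ED, ED'; ring).
      eapply Rle_trans. apply Rabs_triang. rewrite Rabs_Ropp, !Rabs_mult.
      rewrite (Rabs_right (1 + b*u)) by lra.
      rewrite (Rabs_right b), (Rabs_right v) by lra.
      assert (Rabs (v' - v) * (1 + b * u) <= D * Rabs (v' - v)) by
        (rewrite Rmult_comm; apply Rmult_le_compat_r; rewrite ?ED; lra).
      assert (b * v * Rabs (u' - u) <= D * Rabs (u' - u)) by
        (apply Rmult_le_compat_r; rewrite ?ED; lra).
      lra.
    - replace (u' * D - u * D') with ((u' - u) * (1 + b * v) - b * u * (v' - v)) by (rewrite ED, ED'; ring).
      eapply Rle_trans. apply Rabs_triang. rewrite Rabs_Ropp, !Rabs_mult.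
      rewrite (Rabs_right (1 + b*v)) by lra.
      rewrite (Rabs_right b), (Rabs_right u) by lra.
      assert (Rabs (u' - u) * (1 + b * v) <= D * Rabs (u' - u)) by
        (rewrite Rmult_comm; apply Rmult_le_compat_r; rewrite ?ED; lra).
      assert (b * u * Rabs (v' - v) <= D * Rabs (v' - v)) by
        (apply Rmult_le_compat_r; rewrite ?ED; lra).
      lra. }
  unfold Rdiv. rewrite Rabs_mult, Rabs_mult, Rabs_inv.
  rewrite (Rabs_right al) by lra. rewrite (Rabs_right (D' * D)) by (apply Rle_ge, Rmult_le_pos; lra).
  assert (0 <= Rabs (u' - u) + Rabs (v' - v)) by lra.
  apply Rle_trans with (al * (D * (Rabs (u' - u) + Rabs (v' - v))) * / (D' * D)).
  { apply Rmult_le_compat_r. left; apply Rinv_0_lt_compat, Rmult_lt_0_compat; lra.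
    apply Rmult_le_compat_l; auto. }
  replace (al * (D * (Rabs (u' - u) + Rabs (v' - v))) * / (D' * D)) with
    (al * / D' * (Rabs (u' - u) + Rabs (v' - v))) by (field; lra).
  apply Rmult_le_compat_r; auto. apply Rmult_le_compat_l; auto.
  apply Rinv_le_contravar; lra.
Qed.

Lemma exp_mono x y : x <= y -> exp x <= exp y.
Proof. intros H. destruct (Rle_lt_or_eq_dec _ _ H). left; apply exp_increasing; auto. subst; lra. Qed.

Lemma exp_neg_le1 r : 0 <= r -> exp (- r) <= 1.
Proof. intros. rewrite <- exp_0. apply exp_mono. lra. Qed.

Lemma path_rc_gen Dx K (fe fx fs : R -> R) a b : cont2_on (DD Dx) K ->
  (forall r, continuity_pt fe r) -> (forall r, continuity_pt fx r) -> (forall r, continuity_pt fs r) ->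
  (forall r, a <= r <= b -> DD Dx (fx r) (fs r)) ->
  forall r, a <= r <= b -> rc (fun y => a <= y <= b) (fun r => fe r * K (fx r) (fs r)) r.
Proof.
  intros HK He Hx Hs HD r Hr. apply sc1_rc. intros u Hu Hl.
  apply is_lim_seq_mult'. apply is_lim_seq_continuous; auto.
  apply (cont2_on_sc2 _ _ HK (fx r) (fs r) (HD r Hr) (fun n => fx (u n)) (fun n => fs (u n))).
  intro n; apply HD; auto.
  apply is_lim_seq_continuous; auto. apply is_lim_seq_continuous; auto.
Qed.

Lemma path_ex_gen Dx K (fe fx fs : R -> R) a b : cont2_on (DD Dx) K ->
  (forall r, continuity_pt fe r) -> (forall r, continuity_pt fx r) -> (forall r, continuity_pt fs r) ->
  (forall r, a <= r <= b -> DD Dx (fx r) (fs r)) -> a <= b ->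
  ex_RInt (fun r => fe r * K (fx r) (fs r)) a b.
Proof. intros. apply ex_RInt_rc; auto. intros. eapply path_rc_gen; eauto. Qed.

Lemma param_cont Dx K B m d : cont2_on (DD Dx) K -> (forall Y s, DD Dx Y s -> Rabs (K Y s) <= B) ->
  cont2_on (DD Dx) m -> (forall X t, DD Dx X t -> 0 <= m X t <= t) ->
  (forall X t r, DD Dx X t -> 0 <= r <= m X t -> Dx (X - d * r)) ->
  cont2_on (DD Dx) (fun X t => RInt (fun r => exp (- r) * K (X - d * r) (t - r)) 0 (m X t)).
Proof.
  intros HK HB Hm Hmb Hp X0 t0 HD0 eps Heps.
  set (m0 := m X0 t0). assert (Hm0 : 0 <= m0 <= t0) by (apply Hmb; auto).
  set (B' := Rabs B + 1). assert (HB' : 0 < B') by (unfold B'; pose proof (Rabs_pos B); slra).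
  remember (eps / (2 * (m0 + 1))) as e1 eqn:Ee1. assert (He1 : 0 < e1) by (rewrite Ee1; apply Rdiv_lt_0_compat; slra).
  destruct (unif_principle 0 m0 (fun r dl => forall X t, Rabs (X - X0) < dl -> Rabs (t - t0) < dl ->
     Dx (X - d * r) -> 0 <= t - r ->
     Rabs (K (X - d * r) (t - r) - K (X0 - d * r) (t0 - r)) < e1)) as [d2 [Hd2 Hd2']].
  { slra. }
  { intros x dl dl' H [H1 H2] X t H3 H4. apply H; slra. }
  { intros r0 Hr0. assert (HP0 : DD Dx (X0 - d * r0) (t0 - r0)).
    { split. apply (Hp X0 t0); auto; try (fold m0; slra). slra. }
    destruct (HK (X0 - d * r0) (t0 - r0) HP0 (e1/2) ltac:(slra)) as [d0 [Hd0 Hd0']].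
    set (d1 := d0 / (2 + Rabs d)). assert (Hd1 : 0 < d1) by (unfold d1; apply Rdiv_lt_0_compat; pose proof (Rabs_pos d); slra).
    assert (Hd1b : d1 * (2 + Rabs d) = d0) by (unfold d1; field; pose proof (Rabs_pos d); slra).
    exists d1. split; auto. intros y Hy Hyr X t HX Ht HDy Hty.
    assert (Hdr : Rabs (d * y - d * r0) <= Rabs d * d1).
    { replace (d * y - d * r0) with (d * (y - r0)) by ring. rewrite Rabs_mult.
      apply Rmult_le_compat_l. apply Rabs_pos. slra. }
    assert (A1 : Rabs (K (X - d * y) (t - y) - K (X0 - d * r0) (t0 - r0)) < e1 / 2).
    { apply Hd0'. split; auto.
      replace (X - d * y - (X0 - d * r0)) with ((X - X0) - (d * y - d * r0)) by ring.
      eapply Rle_lt_trans. apply Rabs_triang. rewrite Rabs_Ropp. pose proof (Rabs_pos d). nra.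
      replace (t - y - (t0 - r0)) with ((t - t0) - (y - r0)) by ring.
      eapply Rle_lt_trans. apply Rabs_triang. rewrite Rabs_Ropp. pose proof (Rabs_pos d). nra. }
    assert (A2 : Rabs (K (X0 - d * y) (t0 - y) - K (X0 - d * r0) (t0 - r0)) < e1 / 2).
    { apply Hd0'. split. apply (Hp X0 t0); auto; try (fold m0; slra). slra.
      replace (X0 - d * y - (X0 - d * r0)) with (- (d * y - d * r0)) by ring. rewrite Rabs_Ropp.
      pose proof (Rabs_pos d). nra.
      replace (t0 - y - (t0 - r0)) with (- (y - r0)) by ring. rewrite Rabs_Ropp.
      pose proof (Rabs_pos d). nra. }
    replace (K (X - d * y) (t - y) - K (X0 - d * y) (t0 - y)) with
      ((K (X - d * y) (t - y) - K (X0 - d * r0) (t0 - r0)) - (K (X0 - d * y) (t0 - y) - K (X0 - d * r0) (t0 - r0))) by ring.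
    eapply Rle_lt_trans. apply Rabs_triang. rewrite Rabs_Ropp. slra. }
  remember (eps / (4 * B')) as e2 eqn:Ee2. assert (He2 : 0 < e2) by (rewrite Ee2; apply Rdiv_lt_0_compat; slra).
  destruct (Hm X0 t0 HD0 e2 He2) as [d3 [Hd3 Hd3']].
  exists (Rmin d2 d3). split. apply Rmin_pos; auto.
  intros X t HD HX Ht.
  assert (HX2 : Rabs (X - X0) < d2) by (eapply Rlt_le_trans; [exact HX| apply Rmin_l]).
  assert (Ht2 : Rabs (t - t0) < d2) by (eapply Rlt_le_trans; [exact Ht| apply Rmin_l]).
  assert (Hmm : Rabs (m X t - m0) < e2) by (apply Hd3'; auto; [eapply Rlt_le_trans; [exact HX | apply Rmin_r] | eapply Rlt_le_trans; [exact Ht | apply Rmin_r]]).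
  set (m1 := m X t). fold m1 in Hmm. assert (Hm1 : 0 <= m1 <= t) by (apply Hmb; auto).
  set (mn := Rmin m1 m0). assert (Hmn : 0 <= mn /\ mn <= m1 /\ mn <= m0) by
    (unfold mn, Rmin; destruct Rle_dec; slra).
  set (f := fun r => exp (- r) * K (X - d * r) (t - r)).
  set (f0 := fun r => exp (- r) * K (X0 - d * r) (t0 - r)).
  assert (Hf : ex_RInt f 0 m1).
  { apply (path_ex_gen Dx K (fun r => exp (- r)) (fun r => X - d * r) (fun r => t - r)); auto;
    try (intro; reg). intros r Hr. split. apply (Hp X t); auto; try (fold m1; slra). slra. slra. }
  assert (Hf0 : ex_RInt f0 0 m0).
  { apply (path_ex_gen Dx K (fun r => exp (- r)) (fun r => X0 - d * r) (fun r => t0 - r)); auto;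
    try (intro; reg). intros r Hr. split. apply (Hp X0 t0); auto; try (fold m0; slra). slra. slra. }
  assert (Hfa : ex_RInt f 0 mn) by (apply ex_RInt_sub with 0 m1; slra || auto).
  assert (Hfb : ex_RInt f mn m1) by (apply ex_RInt_sub with 0 m1; slra || auto).
  assert (Hf0a : ex_RInt f0 0 mn) by (apply ex_RInt_sub with 0 m0; slra || auto).
  assert (Hf0b : ex_RInt f0 mn m0) by (apply ex_RInt_sub with 0 m0; slra || auto).
  change (Rabs (RInt f 0 m1 - RInt f0 0 m0) < eps).
  rewrite <- (RInt_ChaslesR f 0 mn m1), <- (RInt_ChaslesR f0 0 mn m0) by auto.
  assert (I1 : Rabs (RInt f 0 mn - RInt f0 0 mn) <= (mn - 0) * e1).
  { rewrite <- RInt_minusR by auto. apply abs_RInt_le_const. slra. apply ex_RInt_minusR; auto.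
    intros r Hr. unfold f, f0. rewrite <- Rmult_minus_distr_l, Rabs_mult, Rabs_right by (apply Rle_ge, Rlt_le, exp_pos).
    apply Rle_trans with (1 * e1); [|slra]. apply Rmult_le_compat. left; apply exp_pos. apply Rabs_pos.
    apply exp_neg_le1; slra. left. apply Hd2'; [slra | exact HX2 | exact Ht2 | apply (Hp X t); auto; fold m1; slra | slra]. }
  assert (I2 : Rabs (RInt f mn m1) <= (m1 - mn) * B').
  { apply abs_RInt_le_const. slra. auto. intros r Hr. unfold f. rewrite Rabs_mult, Rabs_right by (apply Rle_ge, Rlt_le, exp_pos).
    apply Rle_trans with (1 * B'); [|slra]. apply Rmult_le_compat. left; apply exp_pos. apply Rabs_pos.
    apply exp_neg_le1; slra. apply Rle_trans with B. apply HB. split. apply (Hp X t); auto; try (fold m1; slra). slra.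
    unfold B'. pose proof (Rle_abs B). slra. }
  assert (I3 : Rabs (RInt f0 mn m0) <= (m0 - mn) * B').
  { apply abs_RInt_le_const. slra. auto. intros r Hr. unfold f0. rewrite Rabs_mult, Rabs_right by (apply Rle_ge, Rlt_le, exp_pos).
    apply Rle_trans with (1 * B'); [|slra]. apply Rmult_le_compat. left; apply exp_pos. apply Rabs_pos.
    apply exp_neg_le1; slra. apply Rle_trans with B. apply HB. split. apply (Hp X0 t0); auto; try (fold m0; slra). slra.
    unfold B'. pose proof (Rle_abs B). slra. }
  assert (Hdiff : m1 - mn + (m0 - mn) < e2 + e2 /\ m1 - mn + (m0 - mn) <= 2 * e2).
  { unfold mn, Rmin; destruct Rle_dec; unfold Rabs in Hmm; destruct Rcase_abs in Hmm; slra. }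
  replace (RInt f 0 mn + RInt f mn m1 - (RInt f0 0 mn + RInt f0 mn m0)) with
    ((RInt f 0 mn - RInt f0 0 mn) + RInt f mn m1 - RInt f0 mn m0) by ring.
  eapply Rle_lt_trans. apply Rabs_triang. rewrite Rabs_Ropp.
  eapply Rle_lt_trans. apply Rplus_le_compat_r. apply Rabs_triang.
  assert (Hc1 : (mn - 0) * e1 <= m0 * e1) by (apply Rmult_le_compat_r; slra).
  assert (Hc2 : m0 * e1 < eps / 2).
  { rewrite Ee1. apply Rmult_lt_reg_r with (2 * (m0 + 1)). slra.
    replace (m0 * (eps / (2 * (m0 + 1))) * (2 * (m0 + 1))) with (m0 * eps) by (field; slra). nra. }
  assert (Hc3 : (m1 - mn) * B' + (m0 - mn) * B' <= eps / 2).
  { replace ((m1 - mn) * B' + (m0 - mn) * B') with ((m1 - mn + (m0 - mn)) * B') by ring.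
    apply Rle_trans with (2 * e2 * B'). apply Rmult_le_compat_r; slra.
    rewrite Ee2. right. field. slra. }
  slra.
Qed.

Lemma cont2_on_ext D f g : cont2_on D f -> (forall X t, D X t -> g X t = f X t) -> cont2_on D g.
Proof.
  intros H Heq X t HD eps He. destruct (H X t HD eps He) as [d [Hd Hd']].
  exists d; split; auto. intros X' t' HD' H1 H2. rewrite !Heq; auto.
Qed.

Lemma cont2_on_plus D f g : cont2_on D f -> cont2_on D g -> cont2_on D (fun X t => f X t + g X t).
Proof.
  intros Hf Hg. apply sc2_cont2_on. intros X t HD x s Hn Hx Hs.
  apply is_lim_seq_plus'. apply (cont2_on_sc2 _ _ Hf); auto. apply (cont2_on_sc2 _ _ Hg); auto.
Qed.

Lemma cont2_on_minus D f g : cont2_on D f -> cont2_on D g -> cont2_on D (fun X t => f X t - g X t).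
Proof.
  intros Hf Hg. apply sc2_cont2_on. intros X t HD x s Hn Hx Hs.
  apply is_lim_seq_minus'. apply (cont2_on_sc2 _ _ Hf); auto. apply (cont2_on_sc2 _ _ Hg); auto.
Qed.

Lemma cont2_on_t D : cont2_on D (fun X t => t).
Proof. intros X t HD eps He. exists eps; split; auto. Qed.

Lemma cont2_on_abs D f : cont2_on D f -> cont2_on D (fun X t => Rabs (f X t)).
Proof.
  intros Hf X t HD eps He. destruct (Hf X t HD eps He) as [d [Hd Hd']].
  exists d; split; auto. intros. eapply Rle_lt_trans. apply Rabs_triang_inv2. auto.
Qed.

Lemma NU_ex S U V X t : Good S U V -> sDx S X -> 0 <= t -> ex_RInt (NU S U V X t) (sloU S X t) t.
Proof.
  intros HG HX Ht. pose proof (loU_bd S X t HX Ht).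
  change (ex_RInt (fun s => (fun s => exp (s - t)) s * KU S U V ((fun s => X + sC S * (s - t)) s) ((fun s => s) s))
     (sloU S X t) t).
  apply (path_ex_gen (sDx S)); try (intro; reg). apply KU_cont; auto.
  intros r Hr. split. apply pathU; auto. lra. lra.
Qed.

Lemma NV_ex S U V X t : Good S U V -> sDx S X -> 0 <= t -> ex_RInt (NV S U V X t) (sloV S X t) t.
Proof.
  intros HG HX Ht. pose proof (loV_bd S X t HX Ht).
  change (ex_RInt (fun s => (fun s => exp (s - t)) s * KV S U V ((fun s => X - sC S * (s - t)) s) ((fun s => s) s))
     (sloV S X t) t).
  apply (path_ex_gen (sDx S)); try (intro; reg). apply KV_cont; auto.
  intros r Hr. split. apply pathV; auto. lra. lra.
Qed.

Lemma PhiU_cont S U V : Good S U V -> cont2_on (DD (sDx S)) (PhiU S U V).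
Proof.
  intros HG.
  apply cont2_on_ext with (f := fun X t => sAU S X t +
     RInt (fun r => exp (- r) * KU S U V (X - sC S * r) (t - r)) 0 ((fun X t => t - sloU S X t) X t)).
  - apply cont2_on_plus. apply AU_cont.
    apply (param_cont (sDx S) (KU S U V) (sal S / bmin S)).
    + apply KU_cont; auto.
    + intros Y s [HY Hs]. destruct (KU_bd S U V Y s HG HY Hs). rewrite Rabs_right; lra.
    + apply cont2_on_minus. apply cont2_on_t. apply loU_cont.
    + intros X t [HX Ht]. pose proof (loU_bd S X t HX Ht). lra.
    + intros X t r [HX Ht] Hr. pose proof (loU_bd S X t HX Ht).
      replace (X - sC S * r) with (X + sC S * ((t - r) - t)) by ring. apply pathU; auto. lra.
  - intros X t [HX Ht]. unfold PhiU. f_equal. rewrite Defs_RInt_eq by (apply NU_ex; auto).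
    destruct (chvar _ _ _ (NU_ex S U V X t HG HX Ht)) as [_ ->].
    apply RInt_extR. intros r _. unfold NU, KU.
    replace (t - r - t) with (- r) by ring. replace (X + sC S * - r) with (X - sC S * r) by ring. auto.
Qed.

Lemma PhiV_cont S U V : Good S U V -> cont2_on (DD (sDx S)) (PhiV S U V).
Proof.
  intros HG.
  apply cont2_on_ext with (f := fun X t => sAV S X t +
     RInt (fun r => exp (- r) * KV S U V (X - (- sC S) * r) (t - r)) 0 ((fun X t => t - sloV S X t) X t)).
  - apply cont2_on_plus. apply AV_cont.
    apply (param_cont (sDx S) (KV S U V) (sal S / bmin S)).
    + apply KV_cont; auto.
    + intros Y s [HY Hs]. destruct (KV_bd S U V Y s HG HY Hs). rewrite Rabs_right; lra.
    + apply cont2_on_minus. apply cont2_on_t. apply loV_cont.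
    + intros X t [HX Ht]. pose proof (loV_bd S X t HX Ht). lra.
    + intros X t r [HX Ht] Hr. pose proof (loV_bd S X t HX Ht).
      replace (X - - sC S * r) with (X - sC S * ((t - r) - t)) by ring. apply pathV; auto. lra.
  - intros X t [HX Ht]. unfold PhiV. f_equal. rewrite Defs_RInt_eq by (apply NV_ex; auto).
    destruct (chvar _ _ _ (NV_ex S U V X t HG HX Ht)) as [_ ->].
    apply RInt_extR. intros r _. unfold NV, KV.
    replace (t - r - t) with (- r) by ring. replace (X - sC S * - r) with (X - - sC S * r) by ring. auto.
Qed.

Lemma abs_RInt_bound (f g : R -> R) a b : a <= b -> ex_RInt f a b -> ex_RInt g a b ->
  (forall x, a <= x <= b -> Rabs (f x) <= g x) -> Rabs (RInt f a b) <= RInt g a b.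
Proof.
  intros Hab Hf Hg H. apply Rabs_le. split.
  - replace (- RInt g a b) with (RInt (fun x => (-1) * g x) a b) by (rewrite (RInt_scalR g a b (-1) Hg); change (@eq R (-1 * RInt g a b) (- RInt g a b)); ring).
    apply RInt_le_R; auto. apply ex_RInt_scalR; auto. intros x Hx. specialize (H x Hx).
    apply Rabs_le_between in H. lra.
  - apply RInt_le_R; auto. intros x Hx. specialize (H x Hx). pose proof (Rle_abs (f x)). lra.
Qed.

Lemma int_exp_bound (E lam lo t : R) : 0 <= E -> 0 <= lam -> lo <= t ->
  ex_RInt (fun s => exp (s - t) * (E * exp (lam * s))) lo t /\
  RInt (fun s => exp (s - t) * (E * exp (lam * s))) lo t <= E * exp (lam * t) / (1 + lam).
Proof.
  intros HE Hl Hlt. destruct (exp_int (1 + lam) lo t ltac:(lra) Hlt) as [Hex Hv].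
  assert (Heq : forall s, exp (s - t) * (E * exp (lam * s)) = (E * exp (lam * t)) * exp ((1 + lam) * (s - t))).
  { intro s.
    replace (exp (lam * s)) with (exp (lam*t) * exp (lam*s - lam*t)) by (rewrite <- exp_plus; f_equal; ring).
    replace (exp ((1+lam)*(s-t))) with (exp (s-t) * exp (lam*s - lam*t)) by (rewrite <- exp_plus; f_equal; ring).
    ring. }
  assert (Hex2 : ex_RInt (fun s => exp (s - t) * (E * exp (lam * s))) lo t).
  { apply ex_RInt_extR with (f := fun s => (E * exp (lam * t)) * exp ((1 + lam) * (s - t))).
    intros; rewrite Heq; auto. apply ex_RInt_scalR; auto. }
  split; auto.
  rewrite (RInt_extR _ (fun s => (E * exp (lam * t)) * exp ((1 + lam) * (s - t)))) by (intros; apply Heq).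
  rewrite RInt_scalR, Hv by auto.
  assert (0 <= E * exp (lam * t)) by (apply Rmult_le_pos; auto; left; apply exp_pos).
  assert (0 < exp ((1 + lam) * (lo - t))) by apply exp_pos.
  unfold Rdiv. rewrite <- Rmult_assoc. apply Rmult_le_compat_r. left; apply Rinv_0_lt_compat; lra.
  assert (E * exp (lam * t) * exp ((1 + lam) * (lo - t)) >= 0) by (apply Rle_ge, Rmult_le_pos; lra).
  lra.
Qed.

Lemma NU_bd S U V X t : Good S U V -> sDx S X -> 0 <= t ->
  0 <= Defs.RInt (NU S U V X t) (sloU S X t) t <= sal S / bmin S * (1 - exp (sloU S X t - t)).
Proof.
  intros HG HX Ht. pose proof (loU_bd S X t HX Ht) as Hlo. rewrite Defs_RInt_eq by (apply NU_ex; auto).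
  pose proof (NU_ex S U V X t HG HX Ht) as Hex.
  destruct (exp_int 1 (sloU S X t) t ltac:(lra) ltac:(lra)) as [He1 Hv].
  split.
  - apply RInt_ge0_R; auto. lra. intros s Hs. rewrite NU_K. apply Rmult_le_pos. left; apply exp_pos.
    refine (proj1 (KU_bd _ _ _ _ _ HG _ _)). apply pathU; auto. lra.
  - apply Rle_trans with (RInt (fun s => sal S / bmin S * exp (1 * (s - t))) (sloU S X t) t).
    apply RInt_le_R; auto. lra. apply ex_RInt_scalR; auto.
    intros s Hs. rewrite NU_K. rewrite Rmult_1_l, Rmult_comm. apply Rmult_le_compat_r. left; apply exp_pos.
    refine (proj2 (KU_bd _ _ _ _ _ HG _ _)). apply pathU; auto. lra.
    rewrite RInt_scalR, Hv by auto. rewrite Rmult_1_l. right. field. pose proof (bmin_pos S); lra.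
Qed.

Lemma NV_bd S U V X t : Good S U V -> sDx S X -> 0 <= t ->
  0 <= Defs.RInt (NV S U V X t) (sloV S X t) t <= sal S / bmin S * (1 - exp (sloV S X t - t)).
Proof.
  intros HG HX Ht. pose proof (loV_bd S X t HX Ht) as Hlo. rewrite Defs_RInt_eq by (apply NV_ex; auto).
  pose proof (NV_ex S U V X t HG HX Ht) as Hex.
  destruct (exp_int 1 (sloV S X t) t ltac:(lra) ltac:(lra)) as [He1 Hv].
  split.
  - apply RInt_ge0_R; auto. lra. intros s Hs. apply Rmult_le_pos. left; apply exp_pos.
    refine (proj1 (KV_bd _ _ _ _ _ HG _ _)). apply pathV; auto. lra.
  - apply Rle_trans with (RInt (fun s => sal S / bmin S * exp (1 * (s - t))) (sloV S X t) t).
    apply RInt_le_R; auto. lra. apply ex_RInt_scalR; auto.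
    intros s Hs. change (NV S U V X t s) with (exp (s - t) * KV S U V (X - sC S * (s - t)) s). rewrite Rmult_1_l, Rmult_comm. apply Rmult_le_compat_r. left; apply exp_pos.
    refine (proj2 (KV_bd _ _ _ _ _ HG _ _)). apply pathV; auto. lra.
    rewrite RInt_scalR, Hv by auto. rewrite Rmult_1_l. right. field. pose proof (bmin_pos S); lra.
Qed.

Lemma Phi_Good S U V : Good S U V -> Good S (PhiU S U V) (PhiV S U V).
Proof.
  intros HG. split. apply PhiU_cont; auto. split. apply PhiV_cont; auto.
  intros X t HX Ht. unfold PhiU, PhiV.
  destruct (NU_bd S U V X t HG HX Ht). destruct (NV_bd S U V X t HG HX Ht).
  destruct (AU_bd S X t HX Ht). destruct (AV_bd S X t HX Ht). lra.
Qed.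

Lemma bound_final (M A t lo : R) : 0 <= M -> 0 <= A -> 0 <= lo -> lo <= t ->
  M * exp (- t) + A * (1 - exp (lo - t)) <= Rmax M A.
Proof.
  intros HM HA Hlo Ht.
  assert (exp (- t) <= exp (lo - t)) by (apply exp_mono; lra).
  assert (exp (lo - t) <= 1) by (rewrite <- exp_0; apply exp_mono; lra).
  assert (0 < exp (- t)) by apply exp_pos.
  assert (M <= Rmax M A) by apply Rmax_l. assert (A <= Rmax M A) by apply Rmax_r.
  apply Rle_trans with (Rmax M A * exp (- t) + Rmax M A * (1 - exp (- t))); [|right; ring].
  apply Rplus_le_compat. apply Rmult_le_compat_r; lra.
  apply Rle_trans with (A * (1 - exp (- t))). apply Rmult_le_compat_l; lra. apply Rmult_le_compat_r; lra.
Qed.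

Lemma diffU St U V U' V' E lam X t : Good St U V -> Good St U' V' -> 0 <= E -> 0 <= lam ->
  (forall Y s, sDx St Y -> 0 <= s -> Rabs (U' Y s - U Y s) + Rabs (V' Y s - V Y s) <= E * exp (lam * s)) ->
  sDx St X -> 0 <= t ->
  Rabs (PhiU St U' V' X t - PhiU St U V X t) <= sal St * E * exp (lam * t) / (1 + lam).
Proof.
  intros HG HG' HE Hl HW HX Ht. pose proof (loU_bd St X t HX Ht) as Hlo.
  unfold PhiU. replace (sAU St X t + Defs.RInt (NU St U' V' X t) (sloU St X t) t -
    (sAU St X t + Defs.RInt (NU St U V X t) (sloU St X t) t)) with
    (Defs.RInt (NU St U' V' X t) (sloU St X t) t - Defs.RInt (NU St U V X t) (sloU St X t) t) by ring.
  rewrite !Defs_RInt_eq by (apply NU_ex; auto).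
  pose proof (NU_ex St U V X t HG HX Ht). pose proof (NU_ex St U' V' X t HG' HX Ht).
  rewrite <- RInt_minusR by auto.
  destruct (int_exp_bound (sal St * E) lam (sloU St X t) t) as [Hex Hb].
  apply Rmult_le_pos; auto. apply al_nn. auto. lra.
  eapply Rle_trans; [|exact Hb].
  apply abs_RInt_bound; auto. lra. apply ex_RInt_minusR; auto.
  intros s Hs. rewrite !NU_K. rewrite <- Rmult_minus_distr_l, Rabs_mult, Rabs_right by (apply Rle_ge; left; apply exp_pos).
  apply Rmult_le_compat_l. left; apply exp_pos.
  set (Y := X + sC St * (s - t)).
  assert (HY : sDx St Y) by (apply pathU; auto).
  assert (Hs0 : 0 <= s) by lra.
  destruct HG as [_ [_ Hn]]. destruct (Hn Y s HY Hs0).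
  destruct HG' as [_ [_ Hn']]. destruct (Hn' Y s HY Hs0).
  pose proof (b_bd St Y HY). pose proof (bmin_pos St).
  unfold KU. eapply Rle_trans. apply (lip_gen (sal St) (sb St Y) (U Y s) (V Y s) (U' Y s) (V' Y s) 1).
  apply al_nn. lra. auto. auto. lra.
  assert (0 <= sb St Y * (U' Y s + V' Y s)) by (apply Rmult_le_pos; lra). lra. left; auto.
  rewrite Rdiv_1_r, Rmult_assoc. apply Rmult_le_compat_l. apply al_nn. apply HW; auto.
Qed.

Lemma diffV St U V U' V' E lam X t : Good St U V -> Good St U' V' -> 0 <= E -> 0 <= lam ->
  (forall Y s, sDx St Y -> 0 <= s -> Rabs (U' Y s - U Y s) + Rabs (V' Y s - V Y s) <= E * exp (lam * s)) ->
  sDx St X -> 0 <= t ->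
  Rabs (PhiV St U' V' X t - PhiV St U V X t) <= sal St * E * exp (lam * t) / (1 + lam).
Proof.
  intros HG HG' HE Hl HW HX Ht. pose proof (loV_bd St X t HX Ht) as Hlo.
  unfold PhiV. replace (sAV St X t + Defs.RInt (NV St U' V' X t) (sloV St X t) t -
    (sAV St X t + Defs.RInt (NV St U V X t) (sloV St X t) t)) with
    (Defs.RInt (NV St U' V' X t) (sloV St X t) t - Defs.RInt (NV St U V X t) (sloV St X t) t) by ring.
  rewrite !Defs_RInt_eq by (apply NV_ex; auto).
  pose proof (NV_ex St U V X t HG HX Ht). pose proof (NV_ex St U' V' X t HG' HX Ht).
  rewrite <- RInt_minusR by auto.
  destruct (int_exp_bound (sal St * E) lam (sloV St X t) t) as [Hex Hb].
  apply Rmult_le_pos; auto. apply al_nn. auto. lra.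
  eapply Rle_trans; [|exact Hb].
  apply abs_RInt_bound; auto. lra. apply ex_RInt_minusR; auto.
  intros s Hs. unfold NV. rewrite <- Rmult_minus_distr_l, Rabs_mult, Rabs_right by (apply Rle_ge; left; apply exp_pos).
  apply Rmult_le_compat_l. left; apply exp_pos.
  set (Y := X - sC St * (s - t)).
  assert (HY : sDx St Y) by (apply pathV; auto).
  assert (Hs0 : 0 <= s) by lra.
  destruct HG as [_ [_ Hn]]. destruct (Hn Y s HY Hs0).
  destruct HG' as [_ [_ Hn']]. destruct (Hn' Y s HY Hs0).
  pose proof (b_bd St Y HY). pose proof (bmin_pos St).
  eapply Rle_trans. apply (lip_gen (sal St) (sb St Y) (U Y s) (V Y s) (U' Y s) (V' Y s) 1).
  apply al_nn. lra. auto. auto. lra.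
  assert (0 <= sb St Y * (U' Y s + V' Y s)) by (apply Rmult_le_pos; lra). lra. right; auto.
  rewrite Rdiv_1_r, Rmult_assoc. apply Rmult_le_compat_l. apply al_nn. apply HW; auto.
Qed.

Fixpoint iterS (St : setting) (n : nat) : (R -> R -> R) * (R -> R -> R) :=
  match n with
  | O => (fun _ _ => 0, fun _ _ => 0)
  | Datatypes.S m => (PhiU St (fst (iterS St m)) (snd (iterS St m)), PhiV St (fst (iterS St m)) (snd (iterS St m)))
  end.

Definition Ui St n := fst (iterS St n).
Definition Vi St n := snd (iterS St n).

Lemma iter_Good St n : Good St (Ui St n) (Vi St n).
Proof.
  induction n.
  - split. intros X t _ eps He. exists 1. split. lra. intros. unfold Ui; simpl. rewrite Rminus_diag, Rabs_R0; auto.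
    split. intros X t _ eps He. exists 1. split. lra. intros. unfold Vi; simpl. rewrite Rminus_diag, Rabs_R0; auto.
    intros. unfold Ui, Vi; simpl; lra.
  - apply (Phi_Good St (Ui St n) (Vi St n) IHn).
Qed.

Lemma MAU_nn St : 0 <= MAU St.
Proof.
  destruct (AU_bd St 0 0 (Dx01 St 0 ltac:(lra)) (Rle_refl 0)). rewrite Ropp_0, exp_0 in H0. lra.
Qed.
Lemma MAV_nn St : 0 <= MAV St.
Proof.
  destruct (AV_bd St 0 0 (Dx01 St 0 ltac:(lra)) (Rle_refl 0)). rewrite Ropp_0, exp_0 in H0. lra.
Qed.

Definition B0 St := MAU St + MAV St + 2 * (sal St / bmin St).
Definition lamS St := 4 * sal St.

Lemma B0_nn St : 0 <= B0 St.
Proof.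
  unfold B0. pose proof (MAU_nn St). pose proof (MAV_nn St). pose proof (al_nn St). pose proof (bmin_pos St).
  assert (0 <= sal St / bmin St) by (apply Rmult_le_pos; auto; left; apply Rinv_0_lt_compat; auto). lra.
Qed.

Lemma exp_ge1 x : 0 <= x -> 1 <= exp x.
Proof. intros. rewrite <- exp_0. apply exp_mono; auto. Qed.

Lemma iter_diff St n X t : sDx St X -> 0 <= t ->
  Rabs (Ui St (Datatypes.S n) X t - Ui St n X t) + Rabs (Vi St (Datatypes.S n) X t - Vi St n X t)
    <= B0 St * (/2)^n * exp (lamS St * t).
Proof.
  pose proof (al_nn St) as Hal. assert (Hlam : 0 <= lamS St) by (unfold lamS; lra).
  revert X t. induction n; intros X t HX Ht.
  - unfold Ui, Vi. simpl. rewrite !Rminus_0_r.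
    pose proof (iter_Good St 0) as HG. unfold Ui, Vi in HG. simpl in HG.
    pose proof (Phi_Good St _ _ HG) as HG1. destruct HG1 as [_ [_ Hn]]. destruct (Hn X t HX Ht).
    rewrite !Rabs_right by lra.
    unfold PhiU, PhiV. destruct (NU_bd St _ _ X t HG HX Ht). destruct (NV_bd St _ _ X t HG HX Ht).
    destruct (AU_bd St X t HX Ht). destruct (AV_bd St X t HX Ht).
    pose proof (loU_bd St X t HX Ht). pose proof (loV_bd St X t HX Ht).
    assert (exp (- t) <= 1) by (apply exp_neg_le1; auto).
    assert (exp (sloU St X t - t) > 0) by apply exp_pos. assert (exp (sloV St X t - t) > 0) by apply exp_pos.
    pose proof (exp_ge1 (lamS St * t) ltac:(apply Rmult_le_pos; auto)).
    pose proof (MAU_nn St). pose proof (MAV_nn St). pose proof (bmin_pos St).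
    assert (0 <= sal St / bmin St) by (apply Rmult_le_pos; auto; left; apply Rinv_0_lt_compat; auto).
    assert (MAU St * exp (- t) <= MAU St) by (rewrite <- (Rmult_1_r (MAU St)) at 2; apply Rmult_le_compat_l; auto).
    assert (MAV St * exp (- t) <= MAV St) by (rewrite <- (Rmult_1_r (MAV St)) at 2; apply Rmult_le_compat_l; auto).
    assert (sal St / bmin St * (1 - exp (sloU St X t - t)) <= sal St / bmin St) by
      (rewrite <- (Rmult_1_r (sal St / bmin St)) at 2; apply Rmult_le_compat_l; lra).
    assert (sal St / bmin St * (1 - exp (sloV St X t - t)) <= sal St / bmin St) by
      (rewrite <- (Rmult_1_r (sal St / bmin St)) at 2; apply Rmult_le_compat_l; lra).
    simpl. rewrite Rmult_1_r. apply Rle_trans with (B0 St). unfold B0. lra.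
    rewrite <- (Rmult_1_r (B0 St)) at 1. apply Rmult_le_compat_l; auto. apply B0_nn.
  - set (E := B0 St * (/2)^n).
    assert (HE : 0 <= E) by (unfold E; apply Rmult_le_pos; [apply B0_nn | apply pow_le; lra]).
    assert (HW : forall Y s, sDx St Y -> 0 <= s ->
      Rabs (Ui St (Datatypes.S n) Y s - Ui St n Y s) + Rabs (Vi St (Datatypes.S n) Y s - Vi St n Y s) <= E * exp (lamS St * s)).
    { intros; apply IHn; auto. }
    pose proof (diffU St _ _ _ _ E (lamS St) X t (iter_Good St n) (iter_Good St (Datatypes.S n)) HE Hlam HW HX Ht) as H1.
    pose proof (diffV St _ _ _ _ E (lamS St) X t (iter_Good St n) (iter_Good St (Datatypes.S n)) HE Hlam HW HX Ht) as H2.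
    change (Ui St (Datatypes.S (Datatypes.S n)) X t) with (PhiU St (Ui St (Datatypes.S n)) (Vi St (Datatypes.S n)) X t).
    change (Vi St (Datatypes.S (Datatypes.S n)) X t) with (PhiV St (Ui St (Datatypes.S n)) (Vi St (Datatypes.S n)) X t).
    change (Ui St (Datatypes.S n) X t) with (PhiU St (Ui St n) (Vi St n) X t).
    change (Vi St (Datatypes.S n) X t) with (PhiV St (Ui St n) (Vi St n) X t).
    assert (HQ : sal St * E * exp (lamS St * t) / (1 + lamS St) + sal St * E * exp (lamS St * t) / (1 + lamS St)
       <= B0 St * (/2)^(Datatypes.S n) * exp (lamS St * t)).
    { simpl. fold E. replace (B0 St * (/2 * (/2)^n)) with (/2 * E) by (unfold E; ring).
      assert (0 <= E * exp (lamS St * t)) by (apply Rmult_le_pos; auto; left; apply exp_pos).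
      unfold lamS. replace (sal St * E * exp (4 * sal St * t) / (1 + 4 * sal St) +
        sal St * E * exp (4 * sal St * t) / (1 + 4 * sal St)) with
        ((2 * sal St / (1 + 4 * sal St)) * (E * exp (4 * sal St * t))) by (field; lra).
      replace (/ 2 * E * exp (4 * sal St * t)) with (/2 * (E * exp (4 * sal St * t))) by ring.
      apply Rmult_le_compat_r. unfold lamS in *; auto.
      apply Rmult_le_reg_r with (1 + 4 * sal St). lra. unfold Rdiv. rewrite Rmult_assoc, Rinv_l by lra. lra. }
    lra.
Qed.

Lemma geom_lim (a : nat -> R) (B : R) : (forall n, Rabs (a (Datatypes.S n) - a n) <= B * (/2)^n) ->
  exists l : R, is_lim_seq a l /\ forall n, Rabs (a n - l) <= 2 * B * (/2)^n.
Proof.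
  intros H.
  assert (HB : 0 <= B). { specialize (H O). simpl in H. pose proof (Rabs_pos (a 1%nat - a 0%nat)). lra. }
  assert (Hk : forall n k, Rabs (a (n + k)%nat - a n) <= 2 * B * (/2)^n * (1 - (/2)^k)).
  { intros n k. induction k.
    - rewrite Nat.add_0_r, Rminus_diag, Rabs_R0. simpl. lra.
    - replace (n + Datatypes.S k)%nat with (Datatypes.S (n + k)) by lia.
      replace (a (Datatypes.S (n + k)) - a n) with ((a (Datatypes.S (n + k)) - a (n + k)%nat) + (a (n + k)%nat - a n)) by ring.
      eapply Rle_trans. apply Rabs_triang. specialize (H (n + k)%nat). rewrite pow_add in H.
      simpl. nra. }
  assert (Hk2 : forall n m, (n <= m)%nat -> Rabs (a m - a n) <= 2 * B * (/2)^n).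
  { intros n m Hnm. replace m with (n + (m - n))%nat by lia. eapply Rle_trans. apply Hk.
    assert (0 <= (/2)^(m - n)) by (apply pow_le; lra). assert (0 <= (/2)^n) by (apply pow_le; lra).
    assert (0 <= 2 * B * (/2)^n) by (apply Rmult_le_pos; lra). nra. }
  destruct (Rcomplete.R_complete a) as [l Hl].
  { intros eps He. destruct (lim_ev _ _ half_pow_lim (eps / (4 * B + 1))) as [N HN].
    apply Rdiv_lt_0_compat; lra.
    exists N. intros n m Hn Hm. unfold R_dist.
    specialize (HN N (le_n N)). rewrite Rminus_0_r, Rabs_right in HN by (apply Rle_ge, pow_le; lra).
    assert (Hb : 4 * B * (/2)^N < eps).
    { apply Rle_lt_trans with ((4 * B + 1) * (/2)^N). apply Rmult_le_compat_r. apply pow_le; lra. lra.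
      apply Rmult_lt_reg_l with (/ (4 * B + 1)). apply Rinv_0_lt_compat; lra.
      rewrite <- Rmult_assoc, Rinv_l, Rmult_1_l by lra. rewrite Rmult_comm. exact HN. }
    replace (a n - a m) with ((a n - a N) - (a m - a N)) by ring.
    eapply Rle_lt_trans. apply Rabs_triang. rewrite Rabs_Ropp.
    pose proof (Hk2 N n Hn). pose proof (Hk2 N m Hm). lra. }
  apply is_lim_seq_Reals in Hl.
  exists l. split; auto. intros n.
  assert (Hl2 : is_lim_seq (fun k => Rabs (a (n + k)%nat - a n)) (Rabs (l - a n))).
  { apply (is_lim_seq_continuous (fun x => Rabs (x - a n))).
    apply (continuity_pt_comp (fun x => x - a n) Rabs). reg. apply Rcontinuity_abs.
    apply (is_lim_seq_incr_n a n l) in Hl. eapply is_lim_seq_ext; [|exact Hl]. intro k. simpl. f_equal. lia. }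
  assert (Hle := is_lim_seq_le _ _ _ _ (fun k => Hk2 n (n + k)%nat ltac:(lia)) Hl2 (is_lim_seq_const _)).
  simpl in Hle. rewrite Rabs_minus_sym. exact Hle.
Qed.

Definition Ulim St X t := real (Lim_seq (fun n => Ui St n X t)).
Definition Vlim St X t := real (Lim_seq (fun n => Vi St n X t)).

Lemma lim_gen (a : nat -> R) B : (forall n, Rabs (a (Datatypes.S n) - a n) <= B * (/2)^n) ->
  is_lim_seq a (real (Lim_seq a)) /\ forall n, Rabs (a n - real (Lim_seq a)) <= 2 * B * (/2)^n.
Proof.
  intros H. destruct (geom_lim a B H) as [l [Hl Hb]].
  rewrite (is_lim_seq_unique _ _ Hl). simpl. split; [exact Hl | exact Hb].
Qed.

Lemma U_lim St X t : sDx St X -> 0 <= t ->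
  is_lim_seq (fun n => Ui St n X t) (Ulim St X t) /\
  forall n, Rabs (Ui St n X t - Ulim St X t) <= 2 * (B0 St * exp (lamS St * t)) * (/2)^n.
Proof.
  intros HX Ht. apply lim_gen. intro n. pose proof (iter_diff St n X t HX Ht).
  pose proof (Rabs_pos (Vi St (Datatypes.S n) X t - Vi St n X t)). nra.
Qed.

Lemma V_lim St X t : sDx St X -> 0 <= t ->
  is_lim_seq (fun n => Vi St n X t) (Vlim St X t) /\
  forall n, Rabs (Vi St n X t - Vlim St X t) <= 2 * (B0 St * exp (lamS St * t)) * (/2)^n.
Proof.
  intros HX Ht. apply lim_gen. intro n. pose proof (iter_diff St n X t HX Ht).
  pose proof (Rabs_pos (Ui St (Datatypes.S n) X t - Ui St n X t)). nra.
Qed.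

Lemma small_pow (K eps : R) : 0 < eps -> exists n, K * (/2)^n < eps.
Proof.
  intros He. destruct (lim_ev _ _ half_pow_lim (eps / (Rabs K + 1))) as [N HN].
  apply Rdiv_lt_0_compat; auto. pose proof (Rabs_pos K); lra.
  exists N. specialize (HN N (le_n N)). rewrite Rminus_0_r, Rabs_right in HN by (apply Rle_ge, pow_le; lra).
  assert (0 <= (/2)^N) by (apply pow_le; lra). pose proof (Rle_abs K). pose proof (Rabs_pos K).
  apply Rle_lt_trans with ((Rabs K + 1) * (/2)^N). apply Rmult_le_compat_r; lra.
  apply Rmult_lt_reg_l with (/ (Rabs K + 1)). apply Rinv_0_lt_compat; lra.
  rewrite <- Rmult_assoc, Rinv_l, Rmult_1_l by lra. rewrite Rmult_comm. exact HN.
Qed.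

Lemma zero_geom (x K : R) : (forall n, Rabs x <= K * (/2)^n) -> x = 0.
Proof.
  intros H. destruct (Req_dec x 0) as [|Hx]; auto.
  assert (Ha : 0 < Rabs x) by (apply Rabs_pos_lt; auto).
  destruct (small_pow K (Rabs x) Ha) as [n Hn]. specialize (H n). lra.
Qed.

Lemma lim_cont_gen St (F : nat -> R -> R -> R) (L : R -> R -> R) :
  (forall n, cont2_on (DD (sDx St)) (F n)) ->
  (forall n X t, sDx St X -> 0 <= t -> Rabs (F n X t - L X t) <= 2 * (B0 St * exp (lamS St * t)) * (/2)^n) ->
  cont2_on (DD (sDx St)) L.
Proof.
  intros Hc Hb X t [HX Ht] eps He.
  assert (Hlam : 0 <= lamS St) by (unfold lamS; pose proof (al_nn St); lra).
  destruct (small_pow (2 * (B0 St * exp (lamS St * (t + 1)))) (eps / 3) ltac:(lra)) as [n Hn].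
  destruct (Hc n X t (conj HX Ht) (eps / 3) ltac:(lra)) as [d [Hd Hd']].
  exists (Rmin d 1). split. apply Rmin_pos; lra.
  intros X' t' [HX' Ht'] H1 H2.
  assert (H1' : Rabs (X' - X) < d) by (eapply Rlt_le_trans; [exact H1 | apply Rmin_l]).
  assert (H2' : Rabs (t' - t) < d) by (eapply Rlt_le_trans; [exact H2 | apply Rmin_l]).
  assert (H3 : Rabs (t' - t) < 1) by (eapply Rlt_le_trans; [exact H2 | apply Rmin_r]).
  specialize (Hd' X' t' (conj HX' Ht') H1' H2').
  pose proof (Hb n X t HX Ht) as B1. pose proof (Hb n X' t' HX' Ht') as B2.
  assert (Hm : forall s, s <= t + 1 -> 2 * (B0 St * exp (lamS St * s)) * (/2)^n <=
     2 * (B0 St * exp (lamS St * (t + 1))) * (/2)^n).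
  { intros s Hs. apply Rmult_le_compat_r. apply pow_le; lra. apply Rmult_le_compat_l. lra.
    apply Rmult_le_compat_l. apply B0_nn. apply exp_mono. apply Rmult_le_compat_l; auto. }
  assert (t' <= t + 1) by (unfold Rabs in H3; destruct Rcase_abs in H3; lra).
  pose proof (Hm t ltac:(lra)). pose proof (Hm t' ltac:(lra)).
  replace (L X' t' - L X t) with (- (F n X' t' - L X' t') + (F n X' t' - F n X t) + (F n X t - L X t)) by ring.
  eapply Rle_lt_trans. apply Rabs_triang. eapply Rle_lt_trans. apply Rplus_le_compat_r. apply Rabs_triang.
  rewrite Rabs_Ropp. lra.
Qed.

Lemma lim_Good St : Good St (Ulim St) (Vlim St).
Proof.
  split; [|split].
  - apply (lim_cont_gen St (Ui St)). intro n; apply (iter_Good St n).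
    intros n X t HX Ht. apply (U_lim St X t HX Ht).
  - apply (lim_cont_gen St (Vi St)). intro n; apply (iter_Good St n).
    intros n X t HX Ht. apply (V_lim St X t HX Ht).
  - intros X t HX Ht. split.
    + pose proof (is_lim_seq_le (fun _ => 0) _ 0 _ (fun n => proj1 (proj2 (proj2 (iter_Good St n)) X t HX Ht))
        (is_lim_seq_const 0) (proj1 (U_lim St X t HX Ht))). simpl in H. auto.
    + pose proof (is_lim_seq_le (fun _ => 0) _ 0 _ (fun n => proj2 (proj2 (proj2 (iter_Good St n)) X t HX Ht))
        (is_lim_seq_const 0) (proj1 (V_lim St X t HX Ht))). simpl in H. auto.
Qed.

Lemma lim_W St n Y s : sDx St Y -> 0 <= s ->
  Rabs (Ui St n Y s - Ulim St Y s) + Rabs (Vi St n Y s - Vlim St Y s) <= (4 * B0 St * (/2)^n) * exp (lamS St * s).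
Proof.
  intros HY Hs. pose proof (proj2 (U_lim St Y s HY Hs) n). pose proof (proj2 (V_lim St Y s HY Hs) n). lra.
Qed.

Lemma lim_eq St X t : sDx St X -> 0 <= t ->
  Ulim St X t = PhiU St (Ulim St) (Vlim St) X t /\ Vlim St X t = PhiV St (Ulim St) (Vlim St) X t.
Proof.
  intros HX Ht.
  assert (Hlam : 0 <= lamS St) by (unfold lamS; pose proof (al_nn St); lra).
  assert (Hal := al_nn St). pose proof (B0_nn St).
  assert (He : 0 < exp (lamS St * t)) by apply exp_pos.
  assert (HE : forall n, 0 <= 4 * B0 St * (/2)^n) by (intro; apply Rmult_le_pos; [lra | apply pow_le; lra]).
  assert (Hq : forall n, sal St * (4 * B0 St * (/2)^n) * exp (lamS St * t) / (1 + lamS St) <=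
     (4 * sal St * B0 St * exp (lamS St * t)) * (/2)^n).
  { intro n. unfold Rdiv. replace (sal St * (4 * B0 St * (/2)^n) * exp (lamS St * t) * / (1 + lamS St)) with
      ((4 * sal St * B0 St * exp (lamS St * t)) * (/2)^n * / (1 + lamS St)) by ring.
    rewrite <- (Rmult_1_r ((4 * sal St * B0 St * exp (lamS St * t)) * (/2)^n)) at 2.
    apply Rmult_le_compat_l. apply Rmult_le_pos. apply Rmult_le_pos. apply Rmult_le_pos; lra. lra. apply pow_le; lra.
    rewrite <- Rinv_1. apply Rinv_le_contravar; lra. }
  split.
  - apply Rminus_diag_uniq. apply (zero_geom _ (2 * (B0 St * exp (lamS St * t)) + 4 * sal St * B0 St * exp (lamS St * t))).
    intro n.
    pose proof (proj2 (U_lim St X t HX Ht) (Datatypes.S n)) as A1.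
    pose proof (diffU St _ _ _ _ _ _ X t (lim_Good St) (iter_Good St n) (HE n) Hlam (lim_W St n) HX Ht) as A2.
    change (Ui St (Datatypes.S n) X t) with (PhiU St (Ui St n) (Vi St n) X t) in A1.
    replace (Ulim St X t - PhiU St (Ulim St) (Vlim St) X t) with
      (- (PhiU St (Ui St n) (Vi St n) X t - Ulim St X t) + (PhiU St (Ui St n) (Vi St n) X t - PhiU St (Ulim St) (Vlim St) X t)) by ring.
    eapply Rle_trans. apply Rabs_triang. rewrite Rabs_Ropp. simpl in A1.
    specialize (Hq n). assert (0 <= (/2)^n) by (apply pow_le; lra).
    assert (2 * (B0 St * exp (lamS St * t)) * (/2 * (/2)^n) <= 2 * (B0 St * exp (lamS St * t)) * (/2)^n).
    { apply Rmult_le_compat_l. apply Rmult_le_pos. lra. apply Rmult_le_pos; lra. lra. }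
    lra.
  - apply Rminus_diag_uniq. apply (zero_geom _ (2 * (B0 St * exp (lamS St * t)) + 4 * sal St * B0 St * exp (lamS St * t))).
    intro n.
    pose proof (proj2 (V_lim St X t HX Ht) (Datatypes.S n)) as A1.
    pose proof (diffV St _ _ _ _ _ _ X t (lim_Good St) (iter_Good St n) (HE n) Hlam (lim_W St n) HX Ht) as A2.
    change (Vi St (Datatypes.S n) X t) with (PhiV St (Ui St n) (Vi St n) X t) in A1.
    replace (Vlim St X t - PhiV St (Ulim St) (Vlim St) X t) with
      (- (PhiV St (Ui St n) (Vi St n) X t - Vlim St X t) + (PhiV St (Ui St n) (Vi St n) X t - PhiV St (Ulim St) (Vlim St) X t)) by ring.
    eapply Rle_trans. apply Rabs_triang. rewrite Rabs_Ropp. simpl in A1.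
    specialize (Hq n). assert (0 <= (/2)^n) by (apply pow_le; lra).
    assert (2 * (B0 St * exp (lamS St * t)) * (/2 * (/2)^n) <= 2 * (B0 St * exp (lamS St * t)) * (/2)^n).
    { apply Rmult_le_compat_l. apply Rmult_le_pos. lra. apply Rmult_le_pos; lra. lra. }
    lra.
Qed.

Lemma sol_boundU St M X t : 0 <= M -> (forall X t, sDx St X -> 0 <= t -> sAU St X t <= M * exp (- t)) ->
  sDx St X -> 0 <= t -> 0 <= Ulim St X t <= Rmax M (sal St / bmin St).
Proof.
  intros HM HA HX Ht. rewrite (proj1 (lim_eq St X t HX Ht)). unfold PhiU.
  destruct (NU_bd St _ _ X t (lim_Good St) HX Ht). destruct (AU_bd St X t HX Ht).
  pose proof (loU_bd St X t HX Ht). pose proof (HA X t HX Ht).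
  assert (0 <= sal St / bmin St) by (apply Rmult_le_pos; [apply al_nn | left; apply Rinv_0_lt_compat, bmin_pos]).
  pose proof (bound_final M (sal St / bmin St) t (sloU St X t) HM H5 ltac:(lra) ltac:(lra)). lra.
Qed.

Lemma sol_boundV St M X t : 0 <= M -> (forall X t, sDx St X -> 0 <= t -> sAV St X t <= M * exp (- t)) ->
  sDx St X -> 0 <= t -> 0 <= Vlim St X t <= Rmax M (sal St / bmin St).
Proof.
  intros HM HA HX Ht. rewrite (proj2 (lim_eq St X t HX Ht)). unfold PhiV.
  destruct (NV_bd St _ _ X t (lim_Good St) HX Ht). destruct (AV_bd St X t HX Ht).
  pose proof (loV_bd St X t HX Ht). pose proof (HA X t HX Ht).
  assert (0 <= sal St / bmin St) by (apply Rmult_le_pos; [apply al_nn | left; apply Rinv_0_lt_compat, bmin_pos]).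
  pose proof (bound_final M (sal St / bmin St) t (sloV St X t) HM H5 ltac:(lra) ltac:(lra)). lra.
Qed.

Lemma iter_per St : (forall X t, sAU St (X + 1) t = sAU St X t) -> (forall X t, sAV St (X + 1) t = sAV St X t) ->
  (forall Y, sb St (Y + 1) = sb St Y) -> (forall X t, sloU St (X + 1) t = sloU St X t) ->
  (forall X t, sloV St (X + 1) t = sloV St X t) ->
  forall n X t, Ui St n (X + 1) t = Ui St n X t /\ Vi St n (X + 1) t = Vi St n X t.
Proof.
  intros HAU HAV Hb HlU HlV n. induction n; intros X t.
  - unfold Ui, Vi; simpl; auto.
  - change (Ui St (Datatypes.S n)) with (PhiU St (Ui St n) (Vi St n)).
    change (Vi St (Datatypes.S n)) with (PhiV St (Ui St n) (Vi St n)).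
    unfold PhiU, PhiV. rewrite HAU, HAV, HlU, HlV.
    assert (E1 : NU St (Ui St n) (Vi St n) (X + 1) t = NU St (Ui St n) (Vi St n) X t).
    { apply functional_extensionality. intro s. unfold NU.
      replace (X + 1 + sC St * (s - t)) with ((X + sC St * (s - t)) + 1) by ring.
      rewrite Hb, (proj1 (IHn _ s)), (proj2 (IHn _ s)). auto. }
    assert (E2 : NV St (Ui St n) (Vi St n) (X + 1) t = NV St (Ui St n) (Vi St n) X t).
    { apply functional_extensionality. intro s. unfold NV.
      replace (X + 1 - sC St * (s - t)) with ((X - sC St * (s - t)) + 1) by ring.
      rewrite Hb, (proj1 (IHn _ s)), (proj2 (IHn _ s)). auto. }
    rewrite E1, E2. auto.
Qed.

Lemma lim_per St : (forall X t, sAU St (X + 1) t = sAU St X t) -> (forall X t, sAV St (X + 1) t = sAV St X t) ->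
  (forall Y, sb St (Y + 1) = sb St Y) -> (forall X t, sloU St (X + 1) t = sloU St X t) ->
  (forall X t, sloV St (X + 1) t = sloV St X t) ->
  forall X t, Ulim St (X + 1) t = Ulim St X t /\ Vlim St (X + 1) t = Vlim St X t.
Proof.
  intros. unfold Ulim, Vlim. split; f_equal; apply Lim_seq_ext; intro n; apply iter_per; auto.
Qed.

Lemma path_ex_D (D : R -> R -> Prop) K (fe fx fs : R -> R) a b : cont2_on D K ->
  (forall r, continuity_pt fe r) -> (forall r, continuity_pt fx r) -> (forall r, continuity_pt fs r) ->
  (forall r, a <= r <= b -> D (fx r) (fs r)) -> a <= b ->
  ex_RInt (fun r => fe r * K (fx r) (fs r)) a b.
Proof.
  intros HK He Hx Hs HD Hab. apply ex_RInt_rc; auto. intros r Hr.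
  apply sc1_rc. intros u Hu Hl.
  apply is_lim_seq_mult'. apply is_lim_seq_continuous; auto.
  apply (cont2_on_sc2 _ _ HK (fx r) (fs r) (HD r Hr) (fun n => fx (u n)) (fun n => fs (u n))).
  intro n; apply HD; auto.
  apply is_lim_seq_continuous; auto. apply is_lim_seq_continuous; auto.
Qed.

Lemma cont2_on_sub (D1 D2 : R -> R -> Prop) U : (forall X t, D2 X t -> D1 X t) -> cont2_on D1 U -> cont2_on D2 U.
Proof.
  intros Hs H X t HD eps He. destruct (H X t (Hs X t HD) eps He) as [d [Hd Hd']].
  exists d; split; auto.
Qed.

Lemma Kp_cont St (D : R -> R -> Prop) U' V' W : (forall Y s, D Y s -> sDx St Y) ->
  cont2_on D U' -> cont2_on D V' -> cont2_on D W ->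
  (forall Y s, D Y s -> / 2 <= 1 + sb St Y * (U' Y s + V' Y s)) ->
  cont2_on D (fun Y s => sal St * W Y s / (1 + sb St Y * (U' Y s + V' Y s))).
Proof.
  intros HDx HU HV HW Hden.
  apply sc2_cont2_on. intros Y s HD x y Hxy Hx Hy.
  apply is_lim_seq_div'.
  - apply is_lim_seq_scal_l with (lu := Finite (W Y s)). apply (cont2_on_sc2 _ _ HW); auto.
  - apply is_lim_seq_plus' with (l1 := 1). apply is_lim_seq_const.
    apply is_lim_seq_mult'.
    + apply (rc_sc1 _ _ _ (b_cont St Y (HDx Y s HD))). intro n; apply (HDx _ _ (Hxy n)). auto.
    + apply is_lim_seq_plus'. apply (cont2_on_sc2 _ _ HU); auto. apply (cont2_on_sc2 _ _ HV); auto.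
  - specialize (Hden Y s HD). lra.
Qed.

Lemma den_half (b bm u v u' v' w : R) : 0 <= b <= bm -> 0 <= u -> 0 <= v ->
  Rabs (u' - u) + Rabs (v' - v) <= w -> w * bm <= / 2 -> / 2 <= 1 + b * (u' + v').
Proof.
  intros Hb Hu Hv Hw Hwb.
  assert (Hs : - w <= u' + v').
  { pose proof (Rabs_pos (u' - u)). pose proof (Rabs_pos (v' - v)).
    pose proof (Rle_abs (-(u' - u))). pose proof (Rle_abs (-(v' - v))).
    rewrite Rabs_Ropp in *. lra. }
  destruct (Rle_dec 0 (u' + v')).
  - assert (0 <= b * (u' + v')) by (apply Rmult_le_pos; lra). lra.
  - assert (b * (u' + v') >= bm * (u' + v')) by nra.
    assert (bm * (u' + v') >= - (w * bm)).
    { assert (0 <= bm) by lra. replace (- (w * bm)) with (bm * (- w)) by ring. apply Rle_ge.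
      apply Rmult_le_compat_l; lra. }
    lra.
Qed.

Lemma diffU_loc St U V U' V' tau t w X :
  Good St U V -> cont2_on (DD (sDx St)) U' -> cont2_on (DD (sDx St)) V' ->
  sDx St X -> 0 <= tau <= t -> 0 <= w -> w * bmax St <= /2 ->
  (forall Y s, sDx St Y -> 0 <= s <= tau -> U' Y s = U Y s /\ V' Y s = V Y s) ->
  (forall Y s, sDx St Y -> tau <= s <= t -> Rabs (U' Y s - U Y s) + Rabs (V' Y s - V Y s) <= w) ->
  Rabs (PhiU St U' V' X t - PhiU St U V X t) <= 2 * sal St * w * (t - tau).
Proof.
  intros HG HU' HV' HX Ht Hw Hwb Z Hs.
  assert (Ht0 : 0 <= t) by lra.
  pose proof (loU_bd St X t HX Ht0) as Hlo.
  assert (Hall : forall Y s, sDx St Y -> 0 <= s <= t -> Rabs (U' Y s - U Y s) + Rabs (V' Y s - V Y s) <= w).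
  { intros Y s HY Hs0. destruct (Rle_dec s tau). destruct (Z Y s HY ltac:(lra)) as [-> ->].
    rewrite !Rminus_diag, Rabs_R0. lra. apply Hs; auto; lra. }
  set (D' := fun Y s => sDx St Y /\ 0 <= s <= t).
  assert (Hden : forall Y s, D' Y s -> /2 <= 1 + sb St Y * (U' Y s + V' Y s)).
  { intros Y s [HY Hs0]. destruct HG as [_ [_ Hn]]. destruct (Hn Y s HY ltac:(lra)).
    pose proof (b_bd St Y HY). pose proof (bmin_pos St).
    apply (den_half (sb St Y) (bmax St) (U Y s) (V Y s)) with w; auto; lra. }
  assert (HK' : cont2_on D' (fun Y s => sal St * V' Y s / (1 + sb St Y * (U' Y s + V' Y s)))).
  { apply Kp_cont. intros Y s [HY _]; auto.
    all: try (apply cont2_on_sub with (DD (sDx St)); [intros Y s [HY Hs0]; split; auto; lra | auto]).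
    exact Hden. }
  assert (Hex' : ex_RInt (NU St U' V' X t) (sloU St X t) t).
  { change (ex_RInt (fun s => (fun s => exp (s - t)) s * (fun Y s => sal St * V' Y s / (1 + sb St Y * (U' Y s + V' Y s)))
       ((fun s => X + sC St * (s - t)) s) ((fun s => s) s)) (sloU St X t) t).
    apply (path_ex_D D'); try (intro; reg); auto.
    intros r Hr. split. apply pathU; auto. lra. lra. }
  pose proof (NU_ex St U V X t HG HX Ht0) as Hex.
  unfold PhiU. replace (sAU St X t + Defs.RInt (NU St U' V' X t) (sloU St X t) t -
    (sAU St X t + Defs.RInt (NU St U V X t) (sloU St X t) t)) with
    (Defs.RInt (NU St U' V' X t) (sloU St X t) t - Defs.RInt (NU St U V X t) (sloU St X t) t) by ring.
  rewrite !Defs_RInt_eq by auto.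
  rewrite <- RInt_minusR by auto.
  set (g := fun s => NU St U' V' X t s - NU St U V X t s).
  assert (Hg : ex_RInt g (sloU St X t) t) by (apply ex_RInt_minusR; auto).
  set (m := Rmax (sloU St X t) tau).
  assert (Hm : sloU St X t <= m <= t) by (unfold m, Rmax; destruct Rle_dec; lra).
  rewrite <- (RInt_ChaslesR g (sloU St X t) m t) by (apply ex_RInt_sub with (sloU St X t) t; auto; lra).
  assert (E0 : RInt g (sloU St X t) m = 0).
  { rewrite (RInt_extR g (fun _ => 0)). rewrite RInt_constR. apply Rmult_0_r.
    intros s Hs0. rewrite Rmin_left in Hs0 by lra. rewrite Rmax_right in Hs0 by lra.
    unfold g, NU. assert (Hs1 : s <= tau) by (unfold m, Rmax in Hs0; destruct Rle_dec in Hs0; lra).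
    destruct (Z (X + sC St * (s - t)) s) as [-> ->]. apply pathU; auto; lra. lra. ring. }
  rewrite E0, Rplus_0_l.
  apply Rle_trans with ((t - m) * (2 * sal St * w)).
  apply abs_RInt_le_const. lra. apply ex_RInt_sub with (sloU St X t) t; auto; lra.
  - intros s Hs0. unfold g. rewrite !NU_K. rewrite <- Rmult_minus_distr_l, Rabs_mult, Rabs_right by (apply Rle_ge; left; apply exp_pos).
    set (Y := X + sC St * (s - t)).
    assert (HY : sDx St Y) by (apply pathU; auto; lra).
    destruct HG as [_ [_ Hn]]. destruct (Hn Y s HY ltac:(lra)).
    pose proof (b_bd St Y HY). pose proof (bmin_pos St). pose proof (al_nn St).
    assert (HL : Rabs (KU St U' V' Y s - KU St U V Y s) <= sal St / / 2 * (Rabs (U' Y s - U Y s) + Rabs (V' Y s - V Y s))).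
    { unfold KU. apply lip_gen; auto. lra. lra. apply Hden. split; auto. lra. }
    assert (HW : Rabs (U' Y s - U Y s) + Rabs (V' Y s - V Y s) <= w) by (apply Hall; auto; lra).
    replace (sal St / / 2) with (2 * sal St) in HL by (field).
    assert (2 * sal St * (Rabs (U' Y s - U Y s) + Rabs (V' Y s - V Y s)) <= 2 * sal St * w) by (apply Rmult_le_compat_l; lra).
    assert (He : exp (s - t) <= 1) by (rewrite <- exp_0; apply exp_mono; lra).
    assert (He0 : 0 < exp (s - t)) by apply exp_pos.
    apply Rle_trans with (1 * (2 * sal St * w)); [|lra].
    apply Rmult_le_compat; [lra | apply Rabs_pos | lra | lra].
  - assert (0 <= 2 * sal St * w) by (pose proof (al_nn St); apply Rmult_le_pos; lra).
    rewrite (Rmult_comm (2 * sal St * w)). apply Rmult_le_compat_r; auto. unfold m, Rmax; destruct Rle_dec; lra.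
Qed.

Lemma diffV_loc St U V U' V' tau t w X :
  Good St U V -> cont2_on (DD (sDx St)) U' -> cont2_on (DD (sDx St)) V' ->
  sDx St X -> 0 <= tau <= t -> 0 <= w -> w * bmax St <= /2 ->
  (forall Y s, sDx St Y -> 0 <= s <= tau -> U' Y s = U Y s /\ V' Y s = V Y s) ->
  (forall Y s, sDx St Y -> tau <= s <= t -> Rabs (U' Y s - U Y s) + Rabs (V' Y s - V Y s) <= w) ->
  Rabs (PhiV St U' V' X t - PhiV St U V X t) <= 2 * sal St * w * (t - tau).
Proof.
  intros HG HU' HV' HX Ht Hw Hwb Z Hs.
  assert (Ht0 : 0 <= t) by lra.
  pose proof (loV_bd St X t HX Ht0) as Hlo.
  assert (Hall : forall Y s, sDx St Y -> 0 <= s <= t -> Rabs (U' Y s - U Y s) + Rabs (V' Y s - V Y s) <= w).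
  { intros Y s HY Hs0. destruct (Rle_dec s tau). destruct (Z Y s HY ltac:(lra)) as [-> ->].
    rewrite !Rminus_diag, Rabs_R0. lra. apply Hs; auto; lra. }
  set (D' := fun Y s => sDx St Y /\ 0 <= s <= t).
  assert (Hden : forall Y s, D' Y s -> /2 <= 1 + sb St Y * (U' Y s + V' Y s)).
  { intros Y s [HY Hs0]. destruct HG as [_ [_ Hn]]. destruct (Hn Y s HY ltac:(lra)).
    pose proof (b_bd St Y HY). pose proof (bmin_pos St).
    apply (den_half (sb St Y) (bmax St) (U Y s) (V Y s)) with w; auto; lra. }
  assert (HK' : cont2_on D' (fun Y s => sal St * U' Y s / (1 + sb St Y * (U' Y s + V' Y s)))).
  { apply Kp_cont. intros Y s [HY _]; auto.
    all: try (apply cont2_on_sub with (DD (sDx St)); [intros Y s [HY Hs0]; split; auto; lra | auto]).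
    exact Hden. }
  assert (Hex' : ex_RInt (NV St U' V' X t) (sloV St X t) t).
  { change (ex_RInt (fun s => (fun s => exp (s - t)) s * (fun Y s => sal St * U' Y s / (1 + sb St Y * (U' Y s + V' Y s)))
       ((fun s => X - sC St * (s - t)) s) ((fun s => s) s)) (sloV St X t) t).
    apply (path_ex_D D'); try (intro; reg); auto.
    intros r Hr. split. apply pathV; auto. lra. lra. }
  pose proof (NV_ex St U V X t HG HX Ht0) as Hex.
  unfold PhiV. replace (sAV St X t + Defs.RInt (NV St U' V' X t) (sloV St X t) t -
    (sAV St X t + Defs.RInt (NV St U V X t) (sloV St X t) t)) with
    (Defs.RInt (NV St U' V' X t) (sloV St X t) t - Defs.RInt (NV St U V X t) (sloV St X t) t) by ring.
  rewrite !Defs_RInt_eq by auto.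
  rewrite <- RInt_minusR by auto.
  set (g := fun s => NV St U' V' X t s - NV St U V X t s).
  assert (Hg : ex_RInt g (sloV St X t) t) by (apply ex_RInt_minusR; auto).
  set (m := Rmax (sloV St X t) tau).
  assert (Hm : sloV St X t <= m <= t) by (unfold m, Rmax; destruct Rle_dec; lra).
  rewrite <- (RInt_ChaslesR g (sloV St X t) m t) by (apply ex_RInt_sub with (sloV St X t) t; auto; lra).
  assert (E0 : RInt g (sloV St X t) m = 0).
  { rewrite (RInt_extR g (fun _ => 0)). rewrite RInt_constR. apply Rmult_0_r.
    intros s Hs0. rewrite Rmin_left in Hs0 by lra. rewrite Rmax_right in Hs0 by lra.
    unfold g, NV. assert (Hs1 : s <= tau) by (unfold m, Rmax in Hs0; destruct Rle_dec in Hs0; lra).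
    destruct (Z (X - sC St * (s - t)) s) as [-> ->]. apply pathV; auto; lra. lra. ring. }
  rewrite E0, Rplus_0_l.
  apply Rle_trans with ((t - m) * (2 * sal St * w)).
  apply abs_RInt_le_const. lra. apply ex_RInt_sub with (sloV St X t) t; auto; lra.
  - intros s Hs0. unfold g, NV. rewrite <- Rmult_minus_distr_l, Rabs_mult, Rabs_right by (apply Rle_ge; left; apply exp_pos).
    set (Y := X - sC St * (s - t)).
    assert (HY : sDx St Y) by (apply pathV; auto; lra).
    destruct HG as [_ [_ Hn]]. destruct (Hn Y s HY ltac:(lra)).
    pose proof (b_bd St Y HY). pose proof (bmin_pos St). pose proof (al_nn St).
    assert (HL : Rabs (KV St U' V' Y s - KV St U V Y s) <= sal St / / 2 * (Rabs (U' Y s - U Y s) + Rabs (V' Y s - V Y s))).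
    { unfold KV. apply lip_gen; auto. lra. lra. apply Hden. split; auto. lra. }
    assert (HW : Rabs (U' Y s - U Y s) + Rabs (V' Y s - V Y s) <= w) by (apply Hall; auto; lra).
    unfold KV in HL. replace (sal St / / 2) with (2 * sal St) in HL by (field).
    assert (2 * sal St * (Rabs (U' Y s - U Y s) + Rabs (V' Y s - V Y s)) <= 2 * sal St * w) by (apply Rmult_le_compat_l; lra).
    assert (He : exp (s - t) <= 1) by (rewrite <- exp_0; apply exp_mono; lra).
    assert (He0 : 0 < exp (s - t)) by apply exp_pos.
    apply Rle_trans with (1 * (2 * sal St * w)); [|lra].
    apply Rmult_le_compat; [lra | apply Rabs_pos | lra | lra].
  - assert (0 <= 2 * sal St * w) by (pose proof (al_nn St); apply Rmult_le_pos; lra).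
    rewrite (Rmult_comm (2 * sal St * w)). apply Rmult_le_compat_r; auto. unfold m, Rmax; destruct Rle_dec; lra.
Qed.

Lemma half_pow_le1 n : (/2)^n <= 1.
Proof. induction n. simpl; lra. simpl. assert (0 <= (/2)^n) by (apply pow_le; lra). lra. Qed.

Lemma uniq_main St U' V' :
  cont2_on (DD (sDx St)) U' -> cont2_on (DD (sDx St)) V' ->
  (forall X t, 0 <= X <= 1 -> 0 <= t -> U' X t = PhiU St U' V' X t /\ V' X t = PhiV St U' V' X t) ->
  (forall Y s, sDx St Y -> 0 <= s -> exists Y', 0 <= Y' <= 1 /\ U' Y s = U' Y' s /\ V' Y s = V' Y' s /\
      Ulim St Y s = Ulim St Y' s /\ Vlim St Y s = Vlim St Y' s) ->
  forall X t, sDx St X -> 0 <= t -> U' X t = Ulim St X t /\ V' X t = Vlim St X t.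
Proof.
  intros HU' HV' Heq' Hred.
  pose proof (lim_Good St) as HG. pose proof (lim_eq St) as Heq.
  remember (Ulim St) as U eqn:EU. remember (Vlim St) as V eqn:EV.
  set (W := fun Y s => Rabs (U' Y s - U Y s) + Rabs (V' Y s - V Y s)).
  assert (HWc : cont2_on (DD (sDx St)) W).
  { apply cont2_on_plus; apply cont2_on_abs; apply cont2_on_minus; auto; apply HG. }
  assert (HW0 : forall Y s, 0 <= W Y s).
  { intros. unfold W. pose proof (Rabs_pos (U' Y s - U Y s)). pose proof (Rabs_pos (V' Y s - V Y s)). lra. }
  assert (Wred : forall Y s, sDx St Y -> 0 <= s -> exists Y', 0 <= Y' <= 1 /\ W Y s = W Y' s).
  { intros Y s HY Hs. destruct (Hred Y s HY Hs) as [Y' [HY' [E1 [E2 [E3 E4]]]]].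
    exists Y'. split; auto. unfold W. rewrite E1, E2, E3, E4. auto. }
  set (A := fun tau => forall X s, 0 <= X <= 1 -> 0 <= s <= tau -> W X s = 0).
  assert (A_all : forall tau, A tau -> forall Y s, sDx St Y -> 0 <= s <= tau -> U' Y s = U Y s /\ V' Y s = V Y s).
  { intros tau HA Y s HY Hs. destruct (Wred Y s HY ltac:(lra)) as [Y' [HY' EW]].
    specialize (HA Y' s HY' Hs). rewrite <- EW in HA. unfold W in HA.
    pose proof (Rabs_pos (U' Y s - U Y s)). pose proof (Rabs_pos (V' Y s - V Y s)).
    split; apply Rminus_diag_uniq; apply Rabs_eq_0; lra. }
  assert (A0 : A 0).
  { intros X s HX Hs. assert (s = 0) by lra. subst s.
    assert (HXd : sDx St X) by (apply Dx01; auto).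
    destruct (Heq' X 0 HX (Rle_refl 0)) as [E1 E2]. destruct (Heq X 0 HXd (Rle_refl 0)) as [E3 E4].
    pose proof (loU_bd St X 0 HXd (Rle_refl 0)). pose proof (loV_bd St X 0 HXd (Rle_refl 0)).
    assert (L1 : sloU St X 0 = 0) by lra. assert (L2 : sloV St X 0 = 0) by lra.
    unfold W. rewrite E1, E2, E3, E4. unfold PhiU, PhiV. rewrite L1, L2, !Defs_RInt_point.
    rewrite !Rminus_diag, Rabs_R0. lra. }
  assert (Hbm : 0 < bmax St).
  { pose proof (b_bd St 0 (Dx01 St 0 ltac:(lra))). pose proof (bmin_pos St). lra. }
  assert (Hal := al_nn St).
  assert (Prop1 : forall tau, 0 <= tau -> A tau -> exists d, 0 < d /\ A (tau + d)).
  { intros tau Htau HA.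
    remember (/ (2 * bmax St)) as eta eqn:Eeta.
    assert (Heta : 0 < eta) by (rewrite Eeta; apply Rinv_0_lt_compat; lra).
    assert (Hetab : eta * bmax St = /2) by (rewrite Eeta; field; lra).
    destruct (unif_principle 0 1 (fun X d => forall s, tau <= s <= tau + d -> W X s < eta)) as [d1 [Hd1 Hd1']].
    { lra. }
    { intros x d d' H [H1 H2] s Hs. apply H. lra. }
    { intros X0 HX0. destruct (HWc X0 tau (conj (Dx01 St X0 HX0) Htau) eta Heta) as [d0 [Hd0 Hd0']].
      exists (d0 / 2). split. lra. intros y Hy Hyx s Hs.
      assert (Hw : Rabs (W y s - W X0 tau) < eta).
      { apply Hd0'. split. apply Dx01; auto. lra. lra. unfold Rabs; destruct Rcase_abs; lra. }
      rewrite (HA X0 tau HX0 ltac:(lra)), Rminus_0_r in Hw. pose proof (Rle_abs (W y s)). lra. }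
    remember (Rmin d1 (/ (8 * sal St + 1))) as d eqn:Ed.
    assert (Hd : 0 < d) by (rewrite Ed; apply Rmin_pos; auto; apply Rinv_0_lt_compat; lra).
    assert (Hdd1 : d <= d1) by (rewrite Ed; apply Rmin_l).
    assert (Hdd2 : 4 * sal St * d <= / 2).
    { apply Rle_trans with (4 * sal St * / (8 * sal St + 1)).
      apply Rmult_le_compat_l. lra. rewrite Ed; apply Rmin_r.
      apply Rmult_le_reg_r with (8 * sal St + 1). lra.
      replace (4 * sal St * / (8 * sal St + 1) * (8 * sal St + 1)) with (4 * sal St) by (field; lra). lra. }
    assert (Claim : forall n X s, 0 <= X <= 1 -> tau <= s <= tau + d -> W X s <= eta * (/2)^n).
    { induction n; intros X s HX Hs.
      - simpl. rewrite Rmult_1_r. left. apply Hd1'; auto. lra.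
      - assert (HXd : sDx St X) by (apply Dx01; auto).
        set (w := eta * (/2)^n).
        assert (Hw : 0 <= w) by (unfold w; apply Rmult_le_pos; [lra | apply pow_le; lra]).
        assert (Hwb : w * bmax St <= /2).
        { unfold w. replace (eta * (/2)^n * bmax St) with ((eta * bmax St) * (/2)^n) by ring.
          rewrite Hetab. assert ((/2)^n <= 1) by (apply half_pow_le1). assert (0 <= (/2)^n) by (apply pow_le; lra). nra. }
        assert (HZ : forall Y s', sDx St Y -> 0 <= s' <= tau -> U' Y s' = U Y s' /\ V' Y s' = V Y s').
        { intros; apply (A_all tau HA); auto. }
        assert (HS : forall Y s', sDx St Y -> tau <= s' <= s -> Rabs (U' Y s' - U Y s') + Rabs (V' Y s' - V Y s') <= w).
        { intros Y s' HY Hs'. destruct (Wred Y s' HY ltac:(lra)) as [Y' [HY' EW]].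
          change (W Y s' <= w). rewrite EW. apply IHn; auto. lra. }
        assert (Hts : 0 <= tau <= s) by lra.
        pose proof (diffU_loc St U V U' V' tau s w X HG HU' HV' HXd Hts Hw Hwb HZ HS) as D1.
        pose proof (diffV_loc St U V U' V' tau s w X HG HU' HV' HXd Hts Hw Hwb HZ HS) as D2.
        destruct (Heq' X s HX ltac:(lra)) as [E1 E2]. destruct (Heq X s HXd ltac:(lra)) as [E3 E4].
        unfold W. rewrite E1, E2, E3, E4.
        assert (2 * sal St * w * (s - tau) <= 2 * sal St * w * d).
        { apply Rmult_le_compat_l. apply Rmult_le_pos; lra. lra. }
        assert (2 * sal St * w * d * 2 <= w * / 2).
        { replace (2 * sal St * w * d * 2) with (w * (4 * sal St * d)) by ring.
          apply Rmult_le_compat_l; auto. }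
        replace (eta * (/2)^(Datatypes.S n)) with (w * /2) by (unfold w; simpl; ring).
        lra. }
    exists d. split; auto.
    intros X s HX Hs. destruct (Rle_dec s tau). apply HA; auto; lra.
    pose proof (HW0 X s).
    assert (Hz : W X s - 0 = 0).
    { apply (zero_geom _ eta). intro k. rewrite Rminus_0_r, Rabs_right by lra. apply Claim; auto. lra. }
    lra. }
  assert (Main : forall T, 0 <= T -> A T).
  { intros T HT. apply NNPP. intro HnA.
    set (E := fun tau => 0 <= tau /\ A tau).
    assert (Hdown : forall tau tau', A tau -> tau' <= tau -> A tau').
    { intros tau tau' H H' X s HX Hs. apply H; auto; lra. }
    assert (Hbd : bound E).
    { exists T. intros tau [Ht HA]. apply Rnot_lt_le. intro. apply HnA. apply Hdown with tau; auto; lra. }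
    destruct (completeness E Hbd (ex_intro _ 0 (conj (Rle_refl 0) A0))) as [ts [Hub Hlub]].
    assert (Hts0 : 0 <= ts) by (apply Hub; split; [lra | exact A0]).
    assert (Hbelow : forall X s, 0 <= X <= 1 -> 0 <= s < ts -> W X s = 0).
    { intros X s HX Hs. assert (Hex : exists tau, E tau /\ s < tau).
      { apply NNPP. intro Hn. assert (ts <= s). apply Hlub. intros tau Htau. apply Rnot_lt_le. intro. apply Hn. eauto. lra. }
      destruct Hex as [tau [[Ht HA] Hst]]. apply HA; auto; lra. }
    assert (Ats : A ts).
    { intros X s HX Hs. destruct (Rle_lt_or_eq_dec s ts ltac:(lra)) as [Hlt | Heqs].
      apply Hbelow; auto; lra. subst s.
      destruct (Req_dec ts 0) as [Hz | Hnz]. apply A0; auto; lra.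
      apply NNPP. intro Hn. pose proof (HW0 X ts).
      assert (Hpos : 0 < W X ts) by lra.
      destruct (HWc X ts (conj (Dx01 St X HX) Hts0) (W X ts) Hpos) as [d0 [Hd0 Hd0']].
      set (s' := Rmax 0 (ts - d0 / 2)).
      assert (Hs' : 0 <= s' < ts) by (unfold s', Rmax; destruct Rle_dec; lra).
      assert (Hc : Rabs (W X s' - W X ts) < W X ts).
      { apply Hd0'. split. apply Dx01; auto. lra. rewrite Rminus_diag, Rabs_R0; lra.
        unfold s', Rmax; destruct Rle_dec; unfold Rabs; destruct Rcase_abs; lra. }
      rewrite (Hbelow X s' HX Hs') in Hc. rewrite Rminus_0_l, Rabs_Ropp, Rabs_right in Hc; lra. }
    destruct (Prop1 ts Hts0 Ats) as [d [Hd Ad]].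
    assert (ts + d <= ts) by (apply Hub; split; auto; lra). lra. }
  intros X t HX Ht. apply (A_all t (Main t Ht)); auto. lra.
Qed.

Lemma Int_part_char (y : R) (z : Z) : IZR z <= y < IZR z + 1 -> Int_part y = z.
Proof.
  intros H. unfold Int_part. assert (E : (z + 1)%Z = up y).
  { apply tech_up; rewrite plus_IZR; simpl; lra. }
  rewrite <- E. ring.
Qed.

Lemma frac_bd y : 0 <= frac y < 1.
Proof. unfold frac. destruct (base_Int_part y). lra. Qed.

Lemma frac_char y z : IZR z <= y < IZR z + 1 -> frac y = y - IZR z.
Proof. intros H. unfold frac. rewrite (Int_part_char y z H). auto. Qed.

Lemma frac_plus1 y : frac (y + 1) = frac y.
Proof.
  unfold frac. destruct (base_Int_part y).
  rewrite (Int_part_char (y + 1) (Int_part y + 1)). rewrite plus_IZR. simpl. ring.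
  rewrite plus_IZR; simpl; lra.
Qed.

Lemma frac_id y : 0 <= y < 1 -> frac y = y.
Proof. intros. rewrite (frac_char y 0). simpl; ring. simpl; lra. Qed.

Lemma per_frac_rc (g : R -> R) : (forall y, 0 <= y <= 1 -> rc (fun z => 0 <= z <= 1) g y) -> g 0 = g 1 ->
  forall y, rc (fun _ => True) (fun y => g (frac y)) y.
Proof.
  intros Hg H01 y eps He.
  pose proof (frac_bd y) as Hf. remember (Int_part y) as n eqn:En.
  assert (Hn : IZR n <= y < IZR n + 1) by (rewrite En; destruct (base_Int_part y); lra).
  assert (Hfy : frac y = y - IZR n) by (unfold frac; rewrite <- En; auto).
  destruct (Rle_lt_or_eq_dec 0 (frac y) (proj1 Hf)) as [Hpos | Hzero].
  - destruct (Hg (frac y) ltac:(lra) eps He) as [d [Hd Hd']].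
    exists (Rmin d (Rmin (frac y) (1 - frac y))). split.
    apply Rmin_pos; auto. apply Rmin_pos; lra.
    intros y' _ Hy'. assert (H1 : Rabs (y' - y) < d) by (eapply Rlt_le_trans; [exact Hy' | apply Rmin_l]).
    assert (H2 : Rabs (y' - y) < Rmin (frac y) (1 - frac y)) by (eapply Rlt_le_trans; [exact Hy' | apply Rmin_r]).
    assert (H3 : Rabs (y' - y) < frac y) by (eapply Rlt_le_trans; [exact H2 | apply Rmin_l]).
    assert (H4 : Rabs (y' - y) < 1 - frac y) by (eapply Rlt_le_trans; [exact H2 | apply Rmin_r]).
    assert (Hr : IZR n <= y' < IZR n + 1) by (unfold Rabs in *; destruct Rcase_abs; lra).
    rewrite (frac_char y' n Hr). rewrite Hfy in *. apply Hd'. lra.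
    replace (y' - IZR n - (y - IZR n)) with (y' - y) by ring. auto.
  - destruct (Hg 0 ltac:(lra) eps He) as [d0 [Hd0 Hd0']].
    destruct (Hg 1 ltac:(lra) eps He) as [d1 [Hd1 Hd1']].
    exists (Rmin (Rmin d0 d1) 1). split. apply Rmin_pos. apply Rmin_pos; auto. lra.
    intros y' _ Hy'.
    assert (Ha : Rabs (y' - y) < d0) by (eapply Rlt_le_trans; [exact Hy' | eapply Rle_trans; [apply Rmin_l | apply Rmin_l]]).
    assert (Hb : Rabs (y' - y) < d1) by (eapply Rlt_le_trans; [exact Hy' | eapply Rle_trans; [apply Rmin_l | apply Rmin_r]]).
    assert (Hc : Rabs (y' - y) < 1) by (eapply Rlt_le_trans; [exact Hy' | apply Rmin_r]).
    rewrite <- Hzero. assert (Hyn : y = IZR n) by lra.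
    destruct (Rle_dec y y') as [Hle | Hlt].
    + assert (Hr : IZR n <= y' < IZR n + 1) by (unfold Rabs in *; destruct Rcase_abs; lra).
      rewrite (frac_char y' n Hr). apply Hd0'. lra. rewrite Rminus_0_r. rewrite Hyn in Ha. auto.
    + assert (Hr : IZR (n - 1) <= y' < IZR (n - 1) + 1) by (rewrite minus_IZR; simpl; unfold Rabs in *; destruct Rcase_abs; lra).
      rewrite (frac_char y' (n - 1) Hr). rewrite H01. rewrite minus_IZR in *. simpl in *. apply Hd1'. lra.
      replace (y' - (IZR n - 1) - 1) with (y' - y) by lra. auto.
Qed.

Lemma per_nat (f : R -> R) : (forall X, f (X + 1) = f X) -> forall n X, f (X + INR n) = f X.
Proof.
  intros H n. induction n; intro X. simpl. rewrite Rplus_0_r; auto.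
  rewrite S_INR. replace (X + (INR n + 1)) with ((X + INR n) + 1) by ring. rewrite H. auto.
Qed.

Lemma per_frac (f : R -> R) : (forall X, f (X + 1) = f X) -> forall Y, f (frac Y) = f Y.
Proof.
  intros H Y. unfold frac. destruct (Z.le_gt_cases 0 (Int_part Y)) as [Hz | Hz].
  - destruct (IZN _ Hz) as [m Hm]. rewrite Hm, <- INR_IZR_INZ.
    rewrite <- (per_nat f H m (Y - INR m)). f_equal. ring.
  - assert (Hz' : (0 <= - Int_part Y)%Z) by lia. destruct (IZN _ Hz') as [m Hm].
    replace (Y - IZR (Int_part Y)) with (Y + INR m).
    apply per_nat; auto. rewrite INR_IZR_INZ, <- Hm, opp_IZR. ring.
Qed.

Definition cgood (c : R -> R) (cl cu : R) : Prop :=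
  cont01 c /\ 0 < cl /\ (forall x, 0 <= x <= 1 -> cl <= c x <= cu).

Lemma pm_R (a b : R) : @eq R (a + b - a) b.
Proof. ring. Qed.

Lemma cu_pos c cl cu : cgood c cl cu -> 0 < cu.
Proof. intros [_ [Hcl Hb]]. destruct (Hb 0 ltac:(lra)). lra. Qed.

Lemma inv_c_rc c cl cu x : cgood c cl cu -> 0 <= x <= 1 -> rc (fun y => 0 <= y <= 1) (fun y => / c y) x.
Proof.
  intros [Hc [Hcl Hb]] Hx. apply sc1_rc. intros u Hu Hl.
  pose proof (rc_sc1 _ _ _ (Hc x Hx) u Hu Hl) as H.
  destruct (Hb x Hx).
  apply (is_lim_seq_ext (fun n => 1 / c (u n))). intro n. unfold Rdiv. ring.
  replace (/ c x) with (1 / c x) by (unfold Rdiv; ring).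
  apply is_lim_seq_div'. apply is_lim_seq_const. auto. lra.
Qed.

Lemma inv_c_ex c cl cu a b : cgood c cl cu -> 0 <= a -> a <= b -> b <= 1 -> ex_RInt (fun y => / c y) a b.
Proof.
  intros HG Ha Hab Hb. apply ex_RInt_rc; auto. intros x Hx eps He.
  destruct (inv_c_rc c cl cu x HG ltac:(lra) eps He) as [d [Hd Hd']].
  exists d; split; auto. intros y Hy. apply Hd'. lra.
Qed.

Lemma inv_c_bd c cl cu a b : cgood c cl cu -> 0 <= a -> a <= b -> b <= 1 ->
  (b - a) / cu <= RInt (fun y => / c y) a b <= (b - a) / cl.
Proof.
  intros HG Ha Hab Hb. pose proof (cu_pos c cl cu HG). destruct HG as [Hc [Hcl Hbd]].
  pose proof (inv_c_ex c cl cu a b (conj Hc (conj Hcl Hbd)) Ha Hab Hb) as Hex.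
  split.
  - replace ((b - a) / cu) with (RInt (fun _ => / cu) a b) by (rewrite RInt_constR; reflexivity).
    apply RInt_le_R; auto. apply ex_RInt_const. intros x Hx. destruct (Hbd x ltac:(lra)).
    apply Rinv_le_contravar; lra.
  - replace ((b - a) / cl) with (RInt (fun _ => / cl) a b) by (rewrite RInt_constR; reflexivity).
    apply RInt_le_R; auto. apply ex_RInt_const. intros x Hx. destruct (Hbd x ltac:(lra)).
    apply Rinv_le_contravar; lra.
Qed.

Lemma Cc_eq c cl cu : cgood c cl cu -> Cc c = / RInt (fun y => / c y) 0 1.
Proof. intros HG. unfold Cc. rewrite Defs_RInt_eq; auto. apply (inv_c_ex c cl cu); auto; lra. Qed.

Lemma Cc_bd c cl cu : cgood c cl cu -> cl <= Cc c <= cu.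
Proof.
  intros HG. pose proof (cu_pos c cl cu HG). pose proof HG as [_ [Hcl _]].
  rewrite (Cc_eq c cl cu HG). destruct (inv_c_bd c cl cu 0 1 HG) as [H1 H2]; try lra.
  rewrite Rminus_0_r in H1, H2.
  assert (0 < RInt (fun y => / c y) 0 1) by (eapply Rlt_le_trans; [|exact H1]; apply Rdiv_lt_0_compat; lra).
  split.
  - replace cl with (/ (1 / cl)) by (field; lra). apply Rinv_le_contravar; auto.
  - replace cu with (/ (1 / cu)) by (field; lra). apply Rinv_le_contravar; auto. apply Rdiv_lt_0_compat; lra.
Qed.

Lemma Cc_pos c cl cu : cgood c cl cu -> 0 < Cc c.
Proof. intros HG. pose proof (Cc_bd c cl cu HG). pose proof HG as [_ [Hcl _]]. lra. Qed.

Lemma Xmap_eq c cl cu x : cgood c cl cu -> 0 <= x <= 1 -> Xmap c x = Cc c * RInt (fun y => / c y) 0 x.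
Proof. intros HG Hx. unfold Xmap. rewrite Defs_RInt_eq; auto. apply (inv_c_ex c cl cu); auto; lra. Qed.

Lemma Xmap_diff c cl cu x y : cgood c cl cu -> 0 <= x -> x <= y -> y <= 1 ->
  Cc c * (y - x) / cu <= Xmap c y - Xmap c x <= Cc c * (y - x) / cl.
Proof.
  intros HG Hx Hxy Hy. rewrite (Xmap_eq c cl cu y HG), (Xmap_eq c cl cu x HG) by lra.
  rewrite <- Rmult_minus_distr_l.
  rewrite <- (RInt_ChaslesR (fun y => / c y) 0 x y) by (apply (inv_c_ex c cl cu); auto; lra).
  replace (RInt (fun y0 => / c y0) 0 x + RInt (fun y0 => / c y0) x y - RInt (fun y0 => / c y0) 0 x)
    with (RInt (fun y0 => / c y0) x y) by (first [exact (eq_sym (pm_R _ _)) | exact (pm_R _ _)]).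
  destruct (inv_c_bd c cl cu x y HG) as [H1 H2]; auto; try lra.
  pose proof (Cc_pos c cl cu HG).
  split; unfold Rdiv in *; rewrite Rmult_assoc; apply Rmult_le_compat_l; lra.
Qed.

Lemma Xmap_0 c : Xmap c 0 = 0.
Proof. unfold Xmap. rewrite Defs_RInt_point. ring. Qed.

Lemma Xmap_1 c cl cu : cgood c cl cu -> Xmap c 1 = 1.
Proof.
  intros HG. rewrite (Xmap_eq c cl cu 1 HG) by lra. rewrite (Cc_eq c cl cu HG).
  destruct (inv_c_bd c cl cu 0 1 HG) as [H1 _]; try lra. pose proof (cu_pos c cl cu HG).
  field. assert (0 < (1 - 0) / cu) by (apply Rdiv_lt_0_compat; lra). lra.
Qed.

Lemma Xmap_in c cl cu x : cgood c cl cu -> 0 <= x <= 1 -> 0 <= Xmap c x <= 1.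
Proof.
  intros HG Hx. pose proof (Cc_pos c cl cu HG). pose proof (cu_pos c cl cu HG). pose proof HG as [_ [Hcl _]].
  destruct (Xmap_diff c cl cu 0 x HG) as [H1 _]; try lra. destruct (Xmap_diff c cl cu x 1 HG) as [H2 _]; try lra.
  rewrite Xmap_0 in H1. rewrite (Xmap_1 c cl cu HG) in H2.
  assert (0 <= Cc c * (x - 0) / cu) by (apply Rmult_le_pos; [apply Rmult_le_pos; lra | left; apply Rinv_0_lt_compat; lra]).
  assert (0 <= Cc c * (1 - x) / cu) by (apply Rmult_le_pos; [apply Rmult_le_pos; lra | left; apply Rinv_0_lt_compat; lra]).
  lra.
Qed.

Lemma Xmap_lip_low c cl cu x y : cgood c cl cu -> 0 <= x <= 1 -> 0 <= y <= 1 ->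
  Cc c * Rabs (x - y) / cu <= Rabs (Xmap c x - Xmap c y).
Proof.
  intros HG Hx Hy. destruct (Rle_dec x y).
  - destruct (Xmap_diff c cl cu x y HG) as [H1 _]; try lra.
    rewrite Rabs_minus_sym, (Rabs_minus_sym (Xmap c x)). rewrite (Rabs_right (y - x)) by lra.
    eapply Rle_trans; [exact H1 | apply Rle_abs].
  - destruct (Xmap_diff c cl cu y x HG) as [H1 _]; try lra.
    rewrite (Rabs_right (x - y)) by lra. eapply Rle_trans; [exact H1 | apply Rle_abs].
Qed.

Lemma Xmap_lip_up c cl cu x y : cgood c cl cu -> 0 <= x <= 1 -> 0 <= y <= 1 ->
  Rabs (Xmap c x - Xmap c y) <= Cc c * Rabs (x - y) / cl.
Proof.
  intros HG Hx Hy. pose proof (Cc_pos c cl cu HG). pose proof (cu_pos c cl cu HG).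
  destruct (Rle_dec x y).
  - destruct (Xmap_diff c cl cu x y HG) as [H1 H2]; try lra.
    rewrite Rabs_minus_sym, (Rabs_minus_sym x). rewrite (Rabs_right (y - x)) by lra.
    assert (0 <= Cc c * (y - x) / cu) by (apply Rmult_le_pos; [apply Rmult_le_pos; lra | left; apply Rinv_0_lt_compat; lra]).
    rewrite Rabs_right; lra.
  - destruct (Xmap_diff c cl cu y x HG) as [H1 H2]; try lra.
    rewrite (Rabs_right (x - y)) by lra.
    assert (0 <= Cc c * (x - y) / cu) by (apply Rmult_le_pos; [apply Rmult_le_pos; lra | left; apply Rinv_0_lt_compat; lra]).
    rewrite Rabs_right; lra.
Qed.

Lemma Xmap_surj c cl cu X : cgood c cl cu -> 0 <= X <= 1 -> exists x, 0 <= x <= 1 /\ Xmap c x = X.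
Proof.
  intros HG HX. pose proof (Cc_pos c cl cu HG). pose proof HG as [_ [Hcl _]].
  set (f := fun x => Xmap c (clamp 0 1 x)).
  assert (Hf : continuity f).
  { intros x0 eps He. exists (eps * cl / Cc c). split.
    apply Rdiv_lt_0_compat; [apply Rmult_lt_0_compat|]; lra.
    intros x [_ Hx]. simpl in *. unfold R_dist in *. unfold f.
    eapply Rle_lt_trans. apply (Xmap_lip_up c cl cu); auto; apply clamp_in; lra.
    apply Rle_lt_trans with (Cc c * Rabs (x - x0) / cl).
    unfold Rdiv. apply Rmult_le_compat_r. left; apply Rinv_0_lt_compat; lra.
    apply Rmult_le_compat_l. lra. apply clamp_lip; lra.
    apply Rmult_lt_reg_r with (cl / Cc c). apply Rdiv_lt_0_compat; lra.
    replace (Cc c * Rabs (x - x0) / cl * (cl / Cc c)) with (Rabs (x - x0)) by (field; lra). lra. }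
  assert (f0 : f 0 = 0) by (unfold f; rewrite clamp_id by lra; apply Xmap_0).
  assert (f1 : f 1 = 1) by (unfold f; rewrite clamp_id by lra; apply (Xmap_1 c cl cu HG)).
  destruct (IVT_gen f 0 1 X Hf) as [x [Hx Hfx]].
  rewrite f0, f1, Rmin_left, Rmax_right; lra.
  rewrite Rmin_left, Rmax_right in Hx by lra.
  exists x. split; auto. unfold f in Hfx. rewrite clamp_id in Hfx; auto.
Qed.

Lemma Xinv_spec c cl cu X : cgood c cl cu -> 0 <= X <= 1 -> 0 <= Xinv c X <= 1 /\ Xmap c (Xinv c X) = X.
Proof.
  intros HG HX. unfold Xinv. apply epsilon_spec. apply (Xmap_surj c cl cu); auto.
Qed.

Lemma Xmap_inj c cl cu x y : cgood c cl cu -> 0 <= x <= 1 -> 0 <= y <= 1 -> Xmap c x = Xmap c y -> x = y.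
Proof.
  intros HG Hx Hy H. pose proof (Xmap_lip_low c cl cu x y HG Hx Hy). rewrite H, Rminus_diag, Rabs_R0 in H0.
  pose proof (Cc_pos c cl cu HG). pose proof (cu_pos c cl cu HG).
  assert (Rabs (x - y) <= 0).
  { apply Rmult_le_reg_l with (Cc c / cu). apply Rdiv_lt_0_compat; lra.
    rewrite Rmult_0_r. replace (Cc c / cu * Rabs (x - y)) with (Cc c * Rabs (x - y) / cu) by (field; lra). auto. }
  pose proof (Rabs_pos (x - y)). apply Rminus_diag_uniq. apply Rabs_eq_0. lra.
Qed.

Lemma Xinv_Xmap c cl cu x : cgood c cl cu -> 0 <= x <= 1 -> Xinv c (Xmap c x) = x.
Proof.
  intros HG Hx. pose proof (Xmap_in c cl cu x HG Hx).
  destruct (Xinv_spec c cl cu (Xmap c x) HG H). apply (Xmap_inj c cl cu); auto.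
Qed.

Lemma Xinv_lip c cl cu X Y : cgood c cl cu -> 0 <= X <= 1 -> 0 <= Y <= 1 ->
  Rabs (Xinv c X - Xinv c Y) <= cu / Cc c * Rabs (X - Y).
Proof.
  intros HG HX HY. destruct (Xinv_spec c cl cu X HG HX) as [H1 H2]. destruct (Xinv_spec c cl cu Y HG HY) as [H3 H4].
  pose proof (Xmap_lip_low c cl cu (Xinv c X) (Xinv c Y) HG H1 H3). rewrite H2, H4 in H.
  pose proof (Cc_pos c cl cu HG). pose proof (cu_pos c cl cu HG).
  apply Rmult_le_reg_l with (Cc c / cu). apply Rdiv_lt_0_compat; lra.
  replace (Cc c / cu * (cu / Cc c * Rabs (X - Y))) with (Rabs (X - Y)) by (field; lra).
  replace (Cc c / cu * Rabs (Xinv c X - Xinv c Y)) with (Cc c * Rabs (Xinv c X - Xinv c Y) / cu) by (field; lra). auto.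
Qed.

Lemma Xinv_0 c cl cu : cgood c cl cu -> Xinv c 0 = 0.
Proof. intros HG. rewrite <- (Xmap_0 c) at 1. apply (Xinv_Xmap c cl cu); auto; lra. Qed.
Lemma Xinv_1 c cl cu : cgood c cl cu -> Xinv c 1 = 1.
Proof. intros HG. rewrite <- (Xmap_1 c cl cu HG) at 1. apply (Xinv_Xmap c cl cu); auto; lra. Qed.

Lemma Xinv_sc c cl cu X (u : nat -> R) : cgood c cl cu -> 0 <= X <= 1 -> (forall n, 0 <= u n <= 1) ->
  is_lim_seq u X -> is_lim_seq (fun n => Xinv c (u n)) (Xinv c X).
Proof.
  intros HG HX Hu Hl. apply ev_lim. intros eps He.
  pose proof (Cc_pos c cl cu HG). pose proof (cu_pos c cl cu HG).
  destruct (lim_ev _ _ Hl (eps * Cc c / cu)) as [N HN]. apply Rdiv_lt_0_compat; [apply Rmult_lt_0_compat|]; lra.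
  exists N. intros n Hn. eapply Rle_lt_trans. apply (Xinv_lip c cl cu); auto.
  apply Rmult_lt_reg_l with (Cc c / cu). apply Rdiv_lt_0_compat; lra.
  replace (Cc c / cu * (cu / Cc c * Rabs (u n - X))) with (Rabs (u n - X)) by (field; lra).
  replace (Cc c / cu * eps) with (eps * Cc c / cu) by (field; lra). auto.
Qed.

Lemma comp_Xinv_rc c cl cu (f : R -> R) X : cgood c cl cu -> cont01 f -> 0 <= X <= 1 ->
  rc (fun y => 0 <= y <= 1) (fun Y => f (Xinv c Y)) X.
Proof.
  intros HG Hf HX. apply sc1_rc. intros u Hu Hl.
  destruct (Xinv_spec c cl cu X HG HX) as [H1 _].
  apply (rc_sc1 _ _ _ (Hf _ H1)). intro n. apply (Xinv_spec c cl cu (u n) HG (Hu n)).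
  apply (Xinv_sc c cl cu); auto.
Qed.

Lemma betaf_bd c cl cu Y : cgood c cl cu -> 0 <= Y <= 1 -> Cc c / cu <= betaf c Y <= Cc c / cl.
Proof.
  intros HG HY. unfold betaf. destruct (Xinv_spec c cl cu Y HG HY) as [H1 _].
  pose proof HG as [_ [Hcl Hb]]. destruct (Hb _ H1). pose proof (Cc_pos c cl cu HG).
  unfold Rdiv. split; apply Rmult_le_compat_l; try lra; apply Rinv_le_contravar; lra.
Qed.

Lemma betaf_rc c cl cu Y : cgood c cl cu -> 0 <= Y <= 1 -> rc (fun y => 0 <= y <= 1) (betaf c) Y.
Proof.
  intros HG HY. apply sc1_rc. intros u Hu Hl. unfold betaf.
  pose proof HG as [Hc [Hcl Hb]]. destruct (Xinv_spec c cl cu Y HG HY) as [H1 _]. destruct (Hb _ H1).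
  apply is_lim_seq_div'. apply is_lim_seq_const.
  apply (rc_sc1 _ _ _ (comp_Xinv_rc c cl cu c Y HG Hc HY)); auto. lra.
Qed.

Lemma U0f_rc c cl cu u0 Y : cgood c cl cu -> cont01 u0 -> 0 <= Y <= 1 -> rc (fun y => 0 <= y <= 1) (U0f c u0) Y.
Proof.
  intros HG Hu HY. apply sc1_rc. intros u Hun Hl. unfold U0f.
  pose proof HG as [Hc _].
  apply is_lim_seq_div'. apply is_lim_seq_mult'.
  apply (rc_sc1 _ _ _ (comp_Xinv_rc c cl cu c Y HG Hc HY)); auto.
  apply (rc_sc1 _ _ _ (comp_Xinv_rc c cl cu u0 Y HG Hu HY)); auto.
  apply is_lim_seq_const. pose proof (Cc_pos c cl cu HG). lra.
Qed.

Lemma U0f_bd c cl cu u0 M Y : cgood c cl cu -> (forall x, 0 <= x <= 1 -> 0 <= u0 x <= M) -> 0 <= Y <= 1 ->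
  0 <= U0f c u0 Y <= cu * M / Cc c.
Proof.
  intros HG Hu HY. unfold U0f. destruct (Xinv_spec c cl cu Y HG HY) as [H1 _].
  pose proof HG as [_ [Hcl Hb]]. destruct (Hb _ H1). destruct (Hu _ H1). pose proof (Cc_pos c cl cu HG).
  unfold Rdiv. split.
  - apply Rmult_le_pos. apply Rmult_le_pos; lra. left; apply Rinv_0_lt_compat; lra.
  - apply Rmult_le_compat_r. left; apply Rinv_0_lt_compat; lra. apply Rmult_le_compat; lra.
Qed.

Lemma max_exists (f : R -> R) : cont01 f -> exists M, is_max01 f M.
Proof.
  intros Hf. destruct (continuity_ab_maj (fun x => f (clamp 0 1 x)) 0 1) as [Mx [HM HMx]]. lra.
  { intros x _ eps He.
    destruct (Hf (clamp 0 1 x) (clamp_in 0 1 x ltac:(lra)) eps He) as [d [Hd Hd']].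
    exists d. split; auto. intros y [_ Hy]. simpl in *. unfold R_dist in *.
    apply Hd'. apply clamp_in; lra. eapply Rle_lt_trans. apply clamp_lip; lra. auto. }
  exists (f (clamp 0 1 Mx)). split.
  - intros x Hx. specialize (HM x Hx). rewrite clamp_id in HM; auto.
  - exists Mx. split; auto. rewrite clamp_id; auto.
Qed.

Lemma heav_rc (f : R -> R) : (forall y, 0 <= y <= 1 -> rc (fun z => 0 <= z <= 1) f y) -> f 0 = 0 ->
  forall y0, y0 <= 1 -> rc (fun y => y <= 1) (fun y => f y * Heav y) y0.
Proof.
  intros Hf H0 y0 Hy0 eps He. unfold Heav.
  destruct (Rlt_le_dec y0 0) as [Hneg | Hnn].
  - exists (- y0). split. lra. intros y Hy Hyy; cbv beta in Hy. destruct (Rle_dec 0 y0); [lra|].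
    destruct (Rle_dec 0 y). unfold Rabs in Hyy; destruct Rcase_abs in Hyy; lra.
    rewrite !Rmult_0_r, Rminus_diag, Rabs_R0; auto.
  - destruct (Rle_lt_or_eq_dec 0 y0 Hnn) as [Hpos | Hz].
    + destruct (Hf y0 ltac:(lra) eps He) as [d [Hd Hd']].
      exists (Rmin d y0). split. apply Rmin_pos; lra. intros y Hy Hyy; cbv beta in Hy.
      assert (H1 : Rabs (y - y0) < d) by (eapply Rlt_le_trans; [exact Hyy | apply Rmin_l]).
      assert (H2 : Rabs (y - y0) < y0) by (eapply Rlt_le_trans; [exact Hyy | apply Rmin_r]).
      assert (0 < y) by (unfold Rabs in H2; destruct Rcase_abs in H2; lra).
      destruct (Rle_dec 0 y); [|lra]. destruct (Rle_dec 0 y0); [|lra]. rewrite !Rmult_1_r.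
      apply Hd'; auto.
    + subst y0. destruct (Hf 0 ltac:(lra) eps He) as [d [Hd Hd']].
      exists d. split; auto. intros y Hy Hyy; cbv beta in Hy. destruct (Rle_dec 0 0); [|lra]. rewrite H0, Rmult_0_l.
      destruct (Rle_dec 0 y).
      * rewrite Rmult_1_r. rewrite <- H0. apply Hd'. lra. auto.
      * rewrite Rmult_0_r, Rminus_diag, Rabs_R0; auto.
Qed.

Lemma refl_rc (f : R -> R) : (forall y, 0 <= y <= 1 -> rc (fun z => 0 <= z <= 1) f y) ->
  forall y, 0 <= y <= 1 -> rc (fun z => 0 <= z <= 1) (fun z => f (1 - z)) y.
Proof.
  intros Hf y Hy eps He. destruct (Hf (1 - y) ltac:(lra) eps He) as [d [Hd Hd']].
  exists d. split; auto. intros z Hz Hzz. apply Hd'. lra.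
  replace (1 - z - (1 - y)) with (- (z - y)) by ring. rewrite Rabs_Ropp; auto.
Qed.


Definition DxD (X : R) : Prop := 0 <= X <= 1.

Lemma AUD_cont c cl cu u0 : cgood c cl cu -> cont01 u0 -> u0 0 = 0 ->
  cont2_on (DD DxD) (fun X t => U0f c u0 (X - Cc c * t) * Heav (X - Cc c * t) * exp (- t)).
Proof.
  intros HG Hu H0. pose proof (Cc_pos c cl cu HG) as HC.
  assert (Hg : forall y0, y0 <= 1 -> rc (fun y => y <= 1) (fun y => U0f c u0 y * Heav y) y0).
  { apply heav_rc. intros; apply (U0f_rc c cl cu); auto.
    unfold U0f. rewrite (Xinv_0 c cl cu HG), H0. unfold Rdiv; ring. }
  apply sc2_cont2_on. intros X t [HX Ht] x s Hn Hx Hs. unfold DxD in HX.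
  apply is_lim_seq_mult'.
  - apply (rc_sc1 _ _ _ (Hg (X - Cc c * t) ltac:(nra)) (fun n => x n - Cc c * s n)).
    intro n. destruct (Hn n) as [H1 H2]. unfold DxD in H1. nra.
    apply is_lim_seq_minus'. auto. apply is_lim_seq_scal_l with (lu := Finite t). auto.
  - apply (is_lim_seq_continuous (fun x => exp (- x))). reg. auto.
Qed.

Lemma AVD_cont c cl cu v0 : cgood c cl cu -> cont01 v0 -> v0 1 = 0 ->
  cont2_on (DD DxD) (fun X t => U0f c v0 (X + Cc c * t) * Heav (1 - X - Cc c * t) * exp (- t)).
Proof.
  intros HG Hv H1. pose proof (Cc_pos c cl cu HG) as HC.
  assert (Hg : forall y0, y0 <= 1 -> rc (fun y => y <= 1) (fun y => U0f c v0 (1 - y) * Heav y) y0).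
  { apply heav_rc. apply refl_rc. intros; apply (U0f_rc c cl cu); auto.
    rewrite Rminus_0_r. unfold U0f. rewrite (Xinv_1 c cl cu HG), H1. unfold Rdiv; ring. }
  apply sc2_cont2_on. intros X t [HX Ht] x s Hn Hx Hs. unfold DxD in HX.
  apply is_lim_seq_mult'.
  - replace (U0f c v0 (X + Cc c * t)) with (U0f c v0 (1 - (1 - X - Cc c * t))) by (f_equal; ring).
    apply (is_lim_seq_ext (fun n => U0f c v0 (1 - (1 - x n - Cc c * s n)) * Heav (1 - x n - Cc c * s n))).
    intro n. f_equal. f_equal. ring.
    apply (rc_sc1 _ _ _ (Hg (1 - X - Cc c * t) ltac:(unfold DxD in HX; nra)) (fun n => 1 - x n - Cc c * s n)).
    intro n. destruct (Hn n) as [H2 H3]. unfold DxD in H2. nra.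
    apply is_lim_seq_minus'. apply is_lim_seq_minus'. apply is_lim_seq_const. auto.
    apply is_lim_seq_scal_l with (lu := Finite t). auto.
  - apply (is_lim_seq_continuous (fun x => exp (- x))). reg. auto.
Qed.

Lemma Rmax0_cont z : continuity_pt (fun z => Rmax 0 z) z.
Proof.
  intros eps He. exists eps. split; auto. intros x [_ Hx]. simpl in *. unfold R_dist in *.
  eapply Rle_lt_trans; [|exact Hx]. unfold Rmax. repeat destruct Rle_dec; unfold Rabs; repeat destruct Rcase_abs; lra.
Qed.

Lemma lo_cont_gen (f : R -> R -> R) D : cont2_on D f -> cont2_on D (fun X t => Rmax 0 (f X t)).
Proof.
  intros Hf. apply sc2_cont2_on. intros X t HD x s Hn Hx Hs.
  apply (is_lim_seq_continuous (fun z => Rmax 0 z)). apply Rmax0_cont.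
  apply (cont2_on_sc2 _ _ Hf); auto.
Qed.

Lemma lin_cont D (a b e : R) : cont2_on D (fun X t => a * t + b * X + e).
Proof.
  apply sc2_cont2_on. intros X t HD x s Hn Hx Hs.
  apply is_lim_seq_plus'. apply is_lim_seq_plus'. apply is_lim_seq_scal_l with (lu := Finite t). auto.
  apply is_lim_seq_scal_l with (lu := Finite X). auto. apply is_lim_seq_const.
Qed.

Lemma D_loUcont c : cont2_on (DD DxD) (fun X t => Rmax 0 (t - X / Cc c)).
Proof.
  apply (cont2_on_ext _ (fun X t => Rmax 0 (1 * t + (- / Cc c) * X + 0))).
  apply lo_cont_gen. apply lin_cont. intros X t _. f_equal. unfold Rdiv. ring.
Qed.

Lemma D_loVcont c : cont2_on (DD DxD) (fun X t => Rmax 0 (t - (1 - X) / Cc c)).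
Proof.
  apply (cont2_on_ext _ (fun X t => Rmax 0 (1 * t + (/ Cc c) * X + (- / Cc c)))).
  apply lo_cont_gen. apply lin_cont. intros X t _. f_equal. unfold Rdiv. ring.
Qed.

Lemma D_loUbd c cl cu : cgood c cl cu -> forall X t, DxD X -> 0 <= t -> 0 <= Rmax 0 (t - X / Cc c) <= t.
Proof.
  intros HG X t HX Ht. unfold DxD in HX. pose proof (Cc_pos c cl cu HG).
  assert (0 <= X / Cc c) by (apply Rmult_le_pos; [lra | left; apply Rinv_0_lt_compat; lra]).
  unfold Rmax; destruct Rle_dec; lra.
Qed.

Lemma D_loVbd c cl cu : cgood c cl cu -> forall X t, DxD X -> 0 <= t -> 0 <= Rmax 0 (t - (1 - X) / Cc c) <= t.
Proof.
  intros HG X t HX Ht. unfold DxD in HX. pose proof (Cc_pos c cl cu HG).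
  assert (0 <= (1 - X) / Cc c) by (apply Rmult_le_pos; [lra | left; apply Rinv_0_lt_compat; lra]).
  unfold Rmax; destruct Rle_dec; lra.
Qed.

Lemma D_pathU c cl cu : cgood c cl cu -> forall X t s, DxD X -> 0 <= t -> Rmax 0 (t - X / Cc c) <= s <= t ->
  DxD (X + Cc c * (s - t)).
Proof.
  intros HG X t s HX Ht Hs. unfold DxD in *. pose proof (Cc_pos c cl cu HG).
  assert (t - X / Cc c <= s) by (eapply Rle_trans; [apply Rmax_r | apply Hs]).
  assert (Cc c * (t - X / Cc c) <= Cc c * s) by (apply Rmult_le_compat_l; lra).
  replace (Cc c * (t - X / Cc c)) with (Cc c * t - X) in H1 by (field; lra).
  assert (Cc c * (s - t) <= 0) by (replace 0 with (Cc c * 0) by ring; apply Rmult_le_compat_l; lra).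
  split; nra.
Qed.

Lemma D_pathV c cl cu : cgood c cl cu -> forall X t s, DxD X -> 0 <= t -> Rmax 0 (t - (1 - X) / Cc c) <= s <= t ->
  DxD (X - Cc c * (s - t)).
Proof.
  intros HG X t s HX Ht Hs. unfold DxD in *. pose proof (Cc_pos c cl cu HG).
  assert (t - (1 - X) / Cc c <= s) by (eapply Rle_trans; [apply Rmax_r | apply Hs]).
  assert (Cc c * (t - (1 - X) / Cc c) <= Cc c * s) by (apply Rmult_le_compat_l; lra).
  replace (Cc c * (t - (1 - X) / Cc c)) with (Cc c * t - (1 - X)) in H1 by (field; lra).
  assert (Cc c * (s - t) <= 0) by (replace 0 with (Cc c * 0) by ring; apply Rmult_le_compat_l; lra).
  split; nra.
Qed.

Lemma D_AUbd c cl cu u0 Mu : cgood c cl cu -> (forall x, 0 <= x <= 1 -> 0 <= u0 x <= Mu) ->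
  forall X t, DxD X -> 0 <= t ->
  0 <= U0f c u0 (X - Cc c * t) * Heav (X - Cc c * t) * exp (- t) <= cu * Mu / Cc c * exp (- t).
Proof.
  intros HG Hu X t HX Ht. unfold DxD in HX. pose proof (Cc_pos c cl cu HG). pose proof (exp_pos (- t)).
  unfold Heav. destruct (Rle_dec 0 (X - Cc c * t)).
  - assert (X - Cc c * t <= 1) by nra.
    destruct (U0f_bd c cl cu u0 Mu (X - Cc c * t) HG Hu ltac:(lra)). rewrite Rmult_1_r.
    split. apply Rmult_le_pos; lra. apply Rmult_le_compat_r; lra.
  - rewrite Rmult_0_r, Rmult_0_l. split. lra.
    destruct (Hu 0 ltac:(lra)). assert (0 <= cu * Mu / Cc c).
    { pose proof (cu_pos c cl cu HG). unfold Rdiv. apply Rmult_le_pos. apply Rmult_le_pos; lra. left; apply Rinv_0_lt_compat; lra. }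
    apply Rmult_le_pos; lra.
Qed.

Lemma D_AVbd c cl cu v0 Mv : cgood c cl cu -> (forall x, 0 <= x <= 1 -> 0 <= v0 x <= Mv) ->
  forall X t, DxD X -> 0 <= t ->
  0 <= U0f c v0 (X + Cc c * t) * Heav (1 - X - Cc c * t) * exp (- t) <= cu * Mv / Cc c * exp (- t).
Proof.
  intros HG Hv X t HX Ht. unfold DxD in HX. pose proof (Cc_pos c cl cu HG). pose proof (exp_pos (- t)).
  unfold Heav. destruct (Rle_dec 0 (1 - X - Cc c * t)).
  - assert (0 <= X + Cc c * t) by nra.
    destruct (U0f_bd c cl cu v0 Mv (X + Cc c * t) HG Hv ltac:(lra)). rewrite Rmult_1_r.
    split. apply Rmult_le_pos; lra. apply Rmult_le_compat_r; lra.
  - rewrite Rmult_0_r, Rmult_0_l. split. lra.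
    destruct (Hv 0 ltac:(lra)). assert (0 <= cu * Mv / Cc c).
    { pose proof (cu_pos c cl cu HG). unfold Rdiv. apply Rmult_le_pos. apply Rmult_le_pos; lra. left; apply Rinv_0_lt_compat; lra. }
    apply Rmult_le_pos; lra.
Qed.

Lemma D_bpos c cl cu : cgood c cl cu -> 0 < Cc c / cu.
Proof. intros HG. apply Rdiv_lt_0_compat. apply (Cc_pos c cl cu HG). apply (cu_pos c cl cu HG). Qed.

Definition SD (alpha : R) (c u0 v0 : R -> R) (cl cu Mu Mv : R) (Hal : 0 <= alpha) (HG : cgood c cl cu)
  (Hu : cont01 u0) (Hv : cont01 v0) (Hu0 : u0 0 = 0) (Hv1 : v0 1 = 0)
  (Hub : forall x, 0 <= x <= 1 -> 0 <= u0 x <= Mu) (Hvb : forall x, 0 <= x <= 1 -> 0 <= v0 x <= Mv) : setting :=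
  mkS (Cc c) alpha (betaf c) (Cc c / cu) (Cc c / cl) DxD
    (fun X t => U0f c u0 (X - Cc c * t) * Heav (X - Cc c * t) * exp (- t))
    (fun X t => U0f c v0 (X + Cc c * t) * Heav (1 - X - Cc c * t) * exp (- t))
    (fun X t => Rmax 0 (t - X / Cc c)) (fun X t => Rmax 0 (t - (1 - X) / Cc c))
    (cu * Mu / Cc c) (cu * Mv / Cc c)
    (Cc_pos c cl cu HG) Hal (D_bpos c cl cu HG)
    (fun Y HY => betaf_bd c cl cu Y HG HY) (fun Y HY => betaf_rc c cl cu Y HG HY)
    (fun Y HY => HY)
    (AUD_cont c cl cu u0 HG Hu Hu0) (AVD_cont c cl cu v0 HG Hv Hv1)
    (D_AUbd c cl cu u0 Mu HG Hub) (D_AVbd c cl cu v0 Mv HG Hvb)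
    (D_loUbd c cl cu HG) (D_loVbd c cl cu HG) (D_loUcont c) (D_loVcont c)
    (D_pathU c cl cu HG) (D_pathV c cl cu HG).

Lemma Rmax_scale k a b : 0 <= k -> Rmax (k * a) (k * b) = k * Rmax a b.
Proof.
  intros Hk. unfold Rmax. destruct (Rle_dec (k * a) (k * b)); destruct (Rle_dec a b); auto.
  - destruct (Req_dec k 0). subst; ring. assert (b < a) by lra. assert (k * b < k * a) by (apply Rmult_lt_compat_l; lra). lra.
  - assert (k * a <= k * b) by (apply Rmult_le_compat_l; lra). lra.
Qed.

Lemma final_bound c cl cu Mu alpha Uv x : cgood c cl cu -> 0 <= Mu -> 0 <= alpha ->
  0 <= Uv <= Rmax (cu * Mu / Cc c) (alpha / (Cc c / cu)) -> 0 <= x <= 1 ->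
  0 <= Cc c / c x * Uv <= cu / cl * Rmax Mu alpha.
Proof.
  intros HG HM Hal HU Hx. pose proof (Cc_pos c cl cu HG). pose proof (cu_pos c cl cu HG).
  pose proof HG as [_ [Hcl Hb]]. destruct (Hb x Hx).
  assert (E : Rmax (cu * Mu / Cc c) (alpha / (Cc c / cu)) = cu / Cc c * Rmax Mu alpha).
  { rewrite <- Rmax_scale. f_equal; field; lra. apply Rmult_le_pos; [lra | left; apply Rinv_0_lt_compat; lra]. }
  rewrite E in HU.
  assert (HR : 0 <= Rmax Mu alpha) by (eapply Rle_trans; [exact HM | apply Rmax_l]).
  assert (Hcx : 0 < Cc c / c x) by (apply Rdiv_lt_0_compat; lra).
  split. apply Rmult_le_pos; lra.
  apply Rle_trans with (Cc c / c x * (cu / Cc c * Rmax Mu alpha)). apply Rmult_le_compat_l; lra.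
  replace (Cc c / c x * (cu / Cc c * Rmax Mu alpha)) with (cu / c x * Rmax Mu alpha) by (field; lra).
  apply Rmult_le_compat_r; auto. unfold Rdiv. apply Rmult_le_compat_l. lra. apply Rinv_le_contravar; lra.
Qed.

Lemma max_bounds (f : R -> R) M : is_max01 f M -> (forall x, 0 <= x <= 1 -> 0 <= f x) ->
  0 <= M /\ forall x, 0 <= x <= 1 -> 0 <= f x <= M.
Proof.
  intros [H1 [x0 [Hx0 E]]] Hn. split. rewrite <- E. apply Hn; auto.
  intros x Hx. split; auto.
Qed.

Lemma DBC_result (alpha : R) (c u0 v0 : R -> R) (cl cu : R) :
  0 <= alpha -> cont01 u0 -> cont01 v0 -> cont01 c ->
  (forall x, 0 <= x <= 1 -> 0 <= u0 x /\ 0 <= v0 x) -> 0 < cl ->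
  (forall x, 0 <= x <= 1 -> cl <= c x <= cu) ->
  u0 0 = 0 -> v0 1 = 0 ->
  exists U V : R -> R -> R,
    mild_DBC alpha c u0 v0 U V /\
    (forall U' V', mild_DBC alpha c u0 v0 U' V' ->
       forall X t, 0 <= X <= 1 -> 0 <= t -> U' X t = U X t /\ V' X t = V X t) /\
    sol_bounds alpha c u0 v0 cl cu U V.
Proof.
  intros Hal Hu Hv Hc Hnn Hcl Hb Hu0 Hv1.
  assert (HG : cgood c cl cu) by (split; auto).
  destruct (max_exists u0 Hu) as [Mu0 HMu0]. destruct (max_exists v0 Hv) as [Mv0 HMv0].
  destruct (max_bounds u0 Mu0 HMu0 (fun x Hx => proj1 (Hnn x Hx))) as [_ Hub].
  destruct (max_bounds v0 Mv0 HMv0 (fun x Hx => proj2 (Hnn x Hx))) as [_ Hvb].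
  set (St := SD alpha c u0 v0 cl cu Mu0 Mv0 Hal HG Hu Hv Hu0 Hv1 Hub Hvb).
  exists (Ulim St), (Vlim St).
  pose proof (lim_Good St) as [HU [HV _]].
  split; [|split].
  - split; [exact HU|]. split; [exact HV|].
    intros X t HX Ht. exact (lim_eq St X t HX Ht).
  - intros U' V' [HU' [HV' Heq']] X t HX Ht.
    apply (uniq_main St U' V' HU' HV'); auto.
    intros Y s HY Hs. exists Y. split; auto.
  - intros Mu Mv HMu HMv x t Hx Ht. unfold ufrom.
    destruct (max_bounds u0 Mu HMu (fun x Hx => proj1 (Hnn x Hx))) as [HMu1 Hub'].
    destruct (max_bounds v0 Mv HMv (fun x Hx => proj2 (Hnn x Hx))) as [HMv1 Hvb'].
    pose proof (Xmap_in c cl cu x HG Hx) as HX.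
    assert (M1 : 0 <= cu * Mu / Cc c) by (pose proof (Cc_pos c cl cu HG); pose proof (cu_pos c cl cu HG);
      apply Rmult_le_pos; [apply Rmult_le_pos; lra | left; apply Rinv_0_lt_compat; lra]).
    assert (M2 : 0 <= cu * Mv / Cc c) by (pose proof (Cc_pos c cl cu HG); pose proof (cu_pos c cl cu HG);
      apply Rmult_le_pos; [apply Rmult_le_pos; lra | left; apply Rinv_0_lt_compat; lra]).
    pose proof (sol_boundU St (cu * Mu / Cc c) (Xmap c x) t M1
      (fun X t HX Ht => proj2 (D_AUbd c cl cu u0 Mu HG Hub' X t HX Ht)) HX Ht) as B1.
    pose proof (sol_boundV St (cu * Mv / Cc c) (Xmap c x) t M2
      (fun X t HX Ht => proj2 (D_AVbd c cl cu v0 Mv HG Hvb' X t HX Ht)) HX Ht) as B2.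
    split; apply (final_bound c cl cu); auto.
Qed.

Definition DxP (X : R) : Prop := True.

Lemma U0f_per c cl cu u0 : cgood c cl cu -> u0 0 = u0 1 -> c 0 = c 1 -> U0f c u0 0 = U0f c u0 1.
Proof. intros HG H1 H2. unfold U0f. rewrite (Xinv_0 c cl cu HG), (Xinv_1 c cl cu HG), H1, H2. auto. Qed.

Lemma U0f_frac_rc c cl cu u0 : cgood c cl cu -> cont01 u0 -> u0 0 = u0 1 -> c 0 = c 1 ->
  forall y, rc (fun _ => True) (fun y => U0f c u0 (frac y)) y.
Proof.
  intros HG Hu H1 H2. apply per_frac_rc. intros; apply (U0f_rc c cl cu); auto.
  apply (U0f_per c cl cu); auto.
Qed.

Lemma AUP_cont c cl cu u0 (sg : R) : cgood c cl cu -> cont01 u0 -> u0 0 = u0 1 -> c 0 = c 1 ->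
  cont2_on (DD DxP) (fun X t => U0f c u0 (frac (X + sg * t)) * exp (- t)).
Proof.
  intros HG Hu H1 H2.
  apply sc2_cont2_on. intros X t [HX Ht] x s Hn Hx Hs.
  apply is_lim_seq_mult'.
  - apply (rc_sc1 _ _ _ (U0f_frac_rc c cl cu u0 HG Hu H1 H2 (X + sg * t)) (fun n => x n + sg * s n)).
    intro n; exact I.
    apply is_lim_seq_plus'. auto. apply is_lim_seq_scal_l with (lu := Finite t). auto.
  - apply (is_lim_seq_continuous (fun x => exp (- x))). reg. auto.
Qed.

Lemma P_AUbd c cl cu u0 Mu (sg : R) : cgood c cl cu -> (forall x, 0 <= x <= 1 -> 0 <= u0 x <= Mu) ->
  forall X t, DxP X -> 0 <= t ->
  0 <= U0f c u0 (frac (X + sg * t)) * exp (- t) <= cu * Mu / Cc c * exp (- t).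
Proof.
  intros HG Hu X t _ Ht. pose proof (exp_pos (- t)). pose proof (frac_bd (X + sg * t)).
  destruct (U0f_bd c cl cu u0 Mu (frac (X + sg * t)) HG Hu ltac:(lra)).
  split. apply Rmult_le_pos; lra. apply Rmult_le_compat_r; lra.
Qed.

Lemma P_bbd c cl cu : cgood c cl cu -> forall Y, DxP Y -> Cc c / cu <= betaf c (frac Y) <= Cc c / cl.
Proof. intros HG Y _. pose proof (frac_bd Y). apply (betaf_bd c cl cu); auto; lra. Qed.

Lemma P_bcont c cl cu : cgood c cl cu -> c 0 = c 1 -> forall Y, DxP Y -> rc DxP (fun Y => betaf c (frac Y)) Y.
Proof.
  intros HG H2 Y _. apply (per_frac_rc (betaf c)). intros; apply (betaf_rc c cl cu); auto.
  unfold betaf. rewrite (Xinv_0 c cl cu HG), (Xinv_1 c cl cu HG), H2. auto.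
Qed.

Lemma P_lobd : forall X t : R, DxP X -> 0 <= t -> 0 <= (fun _ _ : R => 0) X t <= t.
Proof. intros. simpl. lra. Qed.

Lemma P_locont : cont2_on (DD DxP) (fun _ _ : R => 0).
Proof. intros X t _ eps He. exists 1. split. lra. intros. rewrite Rminus_diag, Rabs_R0. auto. Qed.

Lemma P_path (sg : R) : forall X t s : R, DxP X -> 0 <= t -> (fun _ _ : R => 0) X t <= s <= t -> DxP (X + sg * (s - t)).
Proof. intros. exact I. Qed.
Lemma P_pathV (sg : R) : forall X t s : R, DxP X -> 0 <= t -> (fun _ _ : R => 0) X t <= s <= t -> DxP (X - sg * (s - t)).
Proof. intros. exact I. Qed.

Definition SP (alpha : R) (c u0 v0 : R -> R) (cl cu Mu Mv : R) (Hal : 0 <= alpha) (HG : cgood c cl cu)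
  (Hu : cont01 u0) (Hv : cont01 v0) (Hu01 : u0 0 = u0 1) (Hv01 : v0 0 = v0 1) (Hc01 : c 0 = c 1)
  (Hub : forall x, 0 <= x <= 1 -> 0 <= u0 x <= Mu) (Hvb : forall x, 0 <= x <= 1 -> 0 <= v0 x <= Mv) : setting :=
  mkS (Cc c) alpha (fun Y => betaf c (frac Y)) (Cc c / cu) (Cc c / cl) DxP
    (fun X t => U0f c u0 (frac (X + (- Cc c) * t)) * exp (- t))
    (fun X t => U0f c v0 (frac (X + Cc c * t)) * exp (- t))
    (fun _ _ => 0) (fun _ _ => 0)
    (cu * Mu / Cc c) (cu * Mv / Cc c)
    (Cc_pos c cl cu HG) Hal (D_bpos c cl cu HG)
    (P_bbd c cl cu HG) (P_bcont c cl cu HG Hc01)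
    (fun Y _ => I)
    (AUP_cont c cl cu u0 (- Cc c) HG Hu Hu01 Hc01) (AUP_cont c cl cu v0 (Cc c) HG Hv Hv01 Hc01)
    (P_AUbd c cl cu u0 Mu (- Cc c) HG Hub) (P_AUbd c cl cu v0 Mv (Cc c) HG Hvb)
    P_lobd P_lobd P_locont P_locont
    (P_path (Cc c)) (P_pathV (Cc c)).

Lemma PBC_result (alpha : R) (c u0 v0 : R -> R) (cl cu : R) :
  0 <= alpha -> cont01 u0 -> cont01 v0 -> cont01 c ->
  (forall x, 0 <= x <= 1 -> 0 <= u0 x /\ 0 <= v0 x) -> 0 < cl ->
  (forall x, 0 <= x <= 1 -> cl <= c x <= cu) ->
  u0 0 = u0 1 -> v0 0 = v0 1 -> c 0 = c 1 ->
  exists U V : R -> R -> R,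
    mild_PBC alpha c u0 v0 U V /\
    (forall U' V', mild_PBC alpha c u0 v0 U' V' ->
       forall X t, 0 <= X <= 1 -> 0 <= t -> U' X t = U X t /\ V' X t = V X t) /\
    sol_bounds alpha c u0 v0 cl cu U V.
Proof.
  intros Hal Hu Hv Hc Hnn Hcl Hb Hu01 Hv01 Hc01.
  assert (HG : cgood c cl cu) by (split; auto).
  destruct (max_exists u0 Hu) as [Mu0 HMu0]. destruct (max_exists v0 Hv) as [Mv0 HMv0].
  destruct (max_bounds u0 Mu0 HMu0 (fun x Hx => proj1 (Hnn x Hx))) as [_ Hub].
  destruct (max_bounds v0 Mv0 HMv0 (fun x Hx => proj2 (Hnn x Hx))) as [_ Hvb].
  set (St := SP alpha c u0 v0 cl cu Mu0 Mv0 Hal HG Hu Hv Hu01 Hv01 Hc01 Hub Hvb).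
  assert (Hper : forall X t, Ulim St (X + 1) t = Ulim St X t /\ Vlim St (X + 1) t = Vlim St X t).
  { apply lim_per; simpl; intros.
    - replace (X + 1 + - Cc c * t) with ((X + - Cc c * t) + 1) by ring. rewrite frac_plus1. auto.
    - replace (X + 1 + Cc c * t) with ((X + Cc c * t) + 1) by ring. rewrite frac_plus1. auto.
    - rewrite frac_plus1. auto.
    - auto.
    - auto. }
  assert (HDD : forall X t, DD DxP X t <-> 0 <= t).
  { intros. unfold DD, DxP. tauto. }
  exists (Ulim St), (Vlim St).
  pose proof (lim_Good St) as [HU [HV _]].
  split; [|split].
  - split; [apply (cont2_on_iff _ _ _ HDD); exact HU|].
    split; [apply (cont2_on_iff _ _ _ HDD); exact HV|].
    split. intros X t _. apply Hper.
    intros X t HX Ht. destruct (lim_eq St X t I Ht) as [E1 E2].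
    split.
    + rewrite E1. unfold PhiU. simpl. replace (X + - Cc c * t) with (X - Cc c * t) by ring. reflexivity.
    + rewrite E2. unfold PhiV. simpl. reflexivity.
  - intros U' V' [HU' [HV' [Hp' Heq']]] X t HX Ht.
    assert (HDD' : forall X t, 0 <= t <-> DD DxP X t) by (intros; symmetry; apply HDD).
    apply (uniq_main St U' V'); auto.
    + apply (cont2_on_iff _ _ _ HDD'); auto.
    + apply (cont2_on_iff _ _ _ HDD'); auto.
    + intros X0 t0 HX0 Ht0. destruct (Heq' X0 t0 HX0 Ht0) as [E1 E2]. split.
      * rewrite E1. unfold PhiU. simpl. replace (X0 + - Cc c * t0) with (X0 - Cc c * t0) by ring. reflexivity.
      * rewrite E2. unfold PhiV. simpl. reflexivity.
    + intros Y s _ Hs. exists (frac Y). pose proof (frac_bd Y). split. lra.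
      split. symmetry. apply (per_frac (fun X => U' X s)). intro; apply Hp'; auto.
      split. symmetry. apply (per_frac (fun X => V' X s)). intro; apply Hp'; auto.
      split. symmetry. apply (per_frac (fun X => Ulim St X s)). intro; apply Hper.
      symmetry. apply (per_frac (fun X => Vlim St X s)). intro; apply Hper.
    + exact I.
  - intros Mu Mv HMu HMv x t Hx Ht. unfold ufrom.
    destruct (max_bounds u0 Mu HMu (fun x Hx => proj1 (Hnn x Hx))) as [HMu1 Hub'].
    destruct (max_bounds v0 Mv HMv (fun x Hx => proj2 (Hnn x Hx))) as [HMv1 Hvb'].
    assert (M1 : 0 <= cu * Mu / Cc c) by (pose proof (Cc_pos c cl cu HG); pose proof (cu_pos c cl cu HG);
      apply Rmult_le_pos; [apply Rmult_le_pos; lra | left; apply Rinv_0_lt_compat; lra]).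
    assert (M2 : 0 <= cu * Mv / Cc c) by (pose proof (Cc_pos c cl cu HG); pose proof (cu_pos c cl cu HG);
      apply Rmult_le_pos; [apply Rmult_le_pos; lra | left; apply Rinv_0_lt_compat; lra]).
    pose proof (sol_boundU St (cu * Mu / Cc c) (Xmap c x) t M1
      (fun X t HX Ht => proj2 (P_AUbd c cl cu u0 Mu (- Cc c) HG Hub' X t HX Ht)) I Ht) as B1.
    pose proof (sol_boundV St (cu * Mv / Cc c) (Xmap c x) t M2
      (fun X t HX Ht => proj2 (P_AUbd c cl cu v0 Mv (Cc c) HG Hvb' X t HX Ht)) I Ht) as B2.
    split; apply (final_bound c cl cu); auto.
Qed.


Theorem proposition3p1 (alpha : R) (c u0 v0 : R -> R) (cl cu : R) :
  0 <= alpha ->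
  cont01 u0 -> cont01 v0 -> cont01 c ->
  (forall x, 0 <= x <= 1 -> 0 <= u0 x /\ 0 <= v0 x) ->
  0 < cl ->
  (forall x, 0 <= x <= 1 -> cl <= c x <= cu) ->
  ((u0 0 = 0 /\ v0 1 = 0) ->
     exists U V : R -> R -> R,
       mild_DBC alpha c u0 v0 U V /\
       (forall U' V', mild_DBC alpha c u0 v0 U' V' ->
          forall X t, 0 <= X <= 1 -> 0 <= t -> U' X t = U X t /\ V' X t = V X t) /\
       sol_bounds alpha c u0 v0 cl cu U V)
  /\
  ((u0 0 = u0 1 /\ v0 0 = v0 1 /\ c 0 = c 1) ->
     exists U V : R -> R -> R,
       mild_PBC alpha c u0 v0 U V /\
       (forall U' V', mild_PBC alpha c u0 v0 U' V' ->
          forall X t, 0 <= X <= 1 -> 0 <= t -> U' X t = U X t /\ V' X t = V X t) /\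
       sol_bounds alpha c u0 v0 cl cu U V).
Proof.
  intros Hal Hu Hv Hc Hnn Hcl Hb. split.
  - intros [H1 H2]. apply DBC_result; auto.
  - intros [H1 [H2 H3]]. apply PBC_result; auto.
Qed.
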